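(* Let $\mathbf F$ be a Baire foliage tree on a space $X$ and let $\varphi$ be a consistent family of foliage grafts for $\mathbf F$ such that every $\mathbf G\in\varphi$ is $\aleph_0$-branching, locally strict, open in $X$, has bounded chains, and has $\mathrm{height}\,\mathbf G\le\omega$. Then $\mathrm{fhybr}(\mathbf F,\varphi)$ is a Baire foliage tree on the subspace $X\setminus\mathrm{loss}(\mathbf F,\varphi)$ of $X$.
   Context: Trees: a tree is a pair $(Q,<)$ with $<$ irreflexive transitive and predecessor sets well-ordered; $\parallel$ = incomparable; $\mathrm{sons}(x)$ = immediate successors; $\max$ = maximal nodes; $0$ = least node; a branch is a maximal chain; bounded chains: every nonempty chain has an upper-bound node; $\kappa$-branching: every non-maximal node has exactly $\kappa$ sons; height of the tree = least ordinal $\beta$ with no node whose predecessor set has order type $\beta$; $A{\downarrow}=\{v:\exists a\in A\ a\le v\}$; for an antichain $A$ and $x\in A{\downarrow}$, $\mathrm{root}(x,A)$ is the unique $r\in A$, $r\le x$. A graft for a tree $\mathcal T$ is a tree $\mathcal G$ with more than one node, least node $0_{\mathcal G}\in\mathrm{nodes}\,\mathcal T$, $\max\mathcal G\subseteq\{v\in\mathrm{nodes}\,\mathcal T:v>_{\mathcal T}0_{\mathcal G}\}$ an antichain in $\mathcal T$, and $\mathrm{impl}\,\mathcal G:=\mathrm{nodes}\,\mathcal G\setminus(\{0_{\mathcal G}\}\cup\max\mathcal G)$ disjoint from $\mathrm{nodes}\,\mathcal T$; $\mathrm{expl}(\mathcal T,\mathcal G)=\{v:v>_{\mathcal T}0_{\mathcal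 G}\}\setminus(\max\mathcal G){\downarrow}_{\mathcal T}$. A consistent family $\gamma$ of grafts for $\mathcal T$: members are grafts with pairwise disjoint implants and for distinct $\mathcal D,\mathcal E$: $0_{\mathcal D}\parallel_{\mathcal T}0_{\mathcal E}$ or $0_{\mathcal D}\in(\max\mathcal E){\downarrow}_{\mathcal T}$ or $0_{\mathcal E}\in(\max\mathcal D){\downarrow}_{\mathcal T}$. $\mathrm{supp}(\mathcal T,\gamma)=\mathrm{nodes}\,\mathcal T\setminus\bigcup_{\mathcal G\in\gamma}\mathrm{expl}(\mathcal T,\mathcal G)$. $\mathrm{hybr}(\mathcal T,\gamma)$ is the tree on $\mathrm{supp}(\mathcal T,\gamma)\cup\bigcup_{\mathcal G\in\gamma}\mathrm{impl}\,\mathcal G$ with $x<y$ iff: (b1) $x,y\in\mathrm{supp}$, $x<_{\mathcal T}y$; (b2) $x,y\in\mathrm{impl}\,\mathcal G$, $x<_{\mathcal G}y$; (b3) $x\in\mathrm{supp}$, $y\in\mathrm{impl}\,\mathcal G$, $x\le_{\mathcal T}0_{\mathcal G}$; (b4) $x\in\mathrm{impl}\,\mathcal G$, $y\in\mathrm{supp}\cap(\max\mathcal G){\downarrow}_{\mathcal T}$, $x<_{\mathcal G}\mathrm{root}_{\mathcal T}(y,\max\mathcal G)$; or (b5) $x\in\mathrm{impl}\,\mathcal D$, $y\in\mathrm{impl}\,\mathcal E$ ($\mathcal D\ne\mathcal E$), $0_{\mathcal E}\in(\max\mathcal D){\downarrow}_{\mathcal T}$, $x<_{\mathcal D}\mathrm{root}_{\mathcal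 T}(0_{\mathcal E},\max\mathcal D)$. Foliage trees: $\mathbf F=(\mathcal T,l)$, skeleton $\mathrm{skel}\,\mathbf F=\mathcal T$, leaves $\mathbf F_x=l(x)$; tree notions refer to the skeleton; $\mathrm{fruit}_{\mathbf F}(A)=\bigcap_{x\in A}\mathbf F_x$. Nonincreasing: $x\le y\Rightarrow\mathbf F_y\subseteq\mathbf F_x$; locally strict: each non-maximal $\mathbf F_x$ is the union of the pairwise disjoint family $(\mathbf F_s)_{s\in\mathrm{sons}(x)}$; strict branches: has a node and every branch has singleton fruit; open in $X$: all leaves open. A Baire foliage tree on $X$ is a foliage tree with skeleton isomorphic to $(\omega^{<\omega},\subsetneq)$, open in $X$, locally strict, with strict branches, and leaf at the least node equal to $X$. A foliage graft for a nonincreasing $\mathbf F$ is a nonincreasing foliage tree $\mathbf G$ with $\mathrm{skel}\,\mathbf G$ a graft for $\mathrm{skel}\,\mathbf F$, $\mathbf G_{0_{\mathbf G}}\subseteq\mathbf F_{0_{\mathbf G}}$, and $\mathbf G_m=\mathbf F_m$ for $m\in\max\mathbf G$; $\mathrm{cut}(\mathbf F,\mathbf G)=\mathbf F_{0_{\mathbf G}}\setminus\mathbf G_{0_{\mathbf G}}$. $\varphi$ is a consistent family of foliage grafts for $\mathbf F$ if its members are foliage grafts for $\mathbf F$ with pairwise distinct skeletons forming a consistent family of grafts for $\mathrm{skel}\,\mathbf F$; $\mathrm{loss}(\mathbf F,\varphi)=\bigcup_{\mathbf G\in\varphi}\mathrm{cut}(\mathbf F,\mathbf G)$; $\mathrm{supp}(\mathbf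 F,\varphi)$ is the support of $\mathrm{skel}\,\mathbf F$ for the skeletons. $\mathrm{fhybr}(\mathbf F,\varphi)$ is the foliage tree $\mathbf H$ with skeleton $\mathrm{hybr}(\mathrm{skel}\,\mathbf F,\{\mathrm{skel}\,\mathbf G:\mathbf G\in\varphi\})$ and leaves $\mathbf H_x=\mathbf G_x\setminus\mathrm{loss}(\mathbf F,\varphi)$ for $x\in\mathrm{impl}\,\mathbf G$, $\mathbf H_x=\mathbf F_x\setminus\mathrm{loss}(\mathbf F,\varphi)$ for $x\in\mathrm{supp}(\mathbf F,\varphi)$. (A Baire foliage tree is nonincreasing, so the foliage grafts make sense.) *)

(* Defs.v *)
From Stdlib Require Import List Arith.
Import ListNotations.
Set Implicit Arguments.

Record tree (N : Type) := Tree { nodes : N -> Prop; lt : N -> N -> Prop }.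

Definition le {N} (T : tree N) (x y : N) : Prop := x = y \/ lt T x y.
Definition comparable {N} (T : tree N) (x y : N) : Prop := le T x y \/ le T y x.
Definition parallel {N} (T : tree N) (x y : N) : Prop := ~ comparable T x y.
Definition chain {N} (T : tree N) (C : N -> Prop) : Prop :=
  (forall x, C x -> nodes T x) /\ (forall x y, C x -> C y -> comparable T x y).

Definition is_tree {N} (T : tree N) : Prop :=
  (forall x y, lt T x y -> nodes T x /\ nodes T y) /\
  (forall x, ~ lt T x x) /\
  (forall x y z, lt T x y -> lt T y z -> lt T x z) /\
  (forall x, nodes T x ->
     chain T (fun y => lt T y x) /\
     (forall S : N -> Prop, (forall y, S y -> lt T y x) -> (exists y, S y) ->
        exists m, S m /\ forall y, S y -> le T m y)).

Definition sons {N} (T : tree N) (x s : N) : Prop :=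
  nodes T s /\ lt T x s /\ ~ (exists z, lt T x z /\ lt T z s).
Definition is_max {N} (T : tree N) (x : N) : Prop :=
  nodes T x /\ ~ (exists y, lt T x y).
Definition is_least {N} (T : tree N) (r : N) : Prop :=
  nodes T r /\ forall x, nodes T x -> le T r x.
Definition branch {N} (T : tree N) (B : N -> Prop) : Prop :=
  chain T B /\ forall C, chain T C -> (forall x, B x -> C x) -> forall x, C x -> B x.
Definition bounded_chains {N} (T : tree N) : Prop :=
  forall C, chain T C -> (exists x, C x) ->
    exists u, nodes T u /\ forall c, C c -> le T c u.
Definition aleph0_branching {N} (T : tree N) : Prop :=
  forall x, nodes T x -> ~ is_max T x ->
    exists f : nat -> N, (forall i j, f i = f j -> i = j) /\
                         (forall s, sons T x s <-> exists i, f i = s).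

Definition pred_type_fin {N} (T : tree N) (x : N) (n : nat) : Prop :=
  exists f : nat -> N,
    (forall i j, i < j -> j < n -> lt T (f i) (f j)) /\
    (forall i, i < n -> lt T (f i) x) /\
    (forall y, lt T y x -> exists i, i < n /\ f i = y).
Definition pred_type_omega {N} (T : tree N) (x : N) : Prop :=
  exists f : nat -> N,
    (forall i j, i < j -> lt T (f i) (f j)) /\
    (forall i, lt T (f i) x) /\
    (forall y, lt T y x -> exists i, f i = y).
(* height T <= omega: some ordinal beta <= omega is the order type of no
   predecessor set of a node *)
Definition height_le_omega {N} (T : tree N) : Prop :=
  (exists n, ~ exists x, nodes T x /\ pred_type_fin T x n) \/
  (~ exists x, nodes T x /\ pred_type_omega T x).

Definition strict_prefix (a b : list nat) : Prop := exists l, l <> [] /\ b = a ++ l.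
Definition iso_baire_tree {N} (T : tree N) : Prop :=
  exists f : N -> list nat,
    (forall x y, nodes T x -> nodes T y -> f x = f y -> x = y) /\
    (forall s, exists x, nodes T x /\ f x = s) /\
    (forall x y, nodes T x -> nodes T y -> (lt T x y <-> strict_prefix (f x) (f y))).

Definition downT {N} (T : tree N) (A : N -> Prop) (v : N) : Prop :=
  exists a, A a /\ le T a v.
Definition impl {N} (G : tree N) (x : N) : Prop :=
  nodes G x /\ (forall r, is_least G r -> x <> r) /\ ~ is_max G x.

Definition graft {N} (T G : tree N) : Prop :=
  is_tree G /\
  (exists x y, nodes G x /\ nodes G y /\ x <> y) /\
  (exists r, is_least G r /\ nodes T r /\
     (forall m, is_max G m -> nodes T m /\ lt T r m) /\
     (forall m m', is_max G m -> is_max G m' -> m <> m' -> parallel T m m') /\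
     (forall x, impl G x -> ~ nodes T x)).

Definition expl {N} (T G : tree N) (v : N) : Prop :=
  (exists r, is_least G r /\ lt T r v) /\ ~ downT T (is_max G) v.

Definition consistent_grafts {N} (T : tree N) (gam : tree N -> Prop) : Prop :=
  (forall G, gam G -> graft T G) /\
  (forall D E, gam D -> gam E -> D <> E ->
     (forall x, impl D x -> ~ impl E x) /\
     (forall rD rE, is_least D rD -> is_least E rE ->
        parallel T rD rE \/ downT T (is_max E) rD \/ downT T (is_max D) rE)).

Definition supp {N} (T : tree N) (gam : tree N -> Prop) (v : N) : Prop :=
  nodes T v /\ ~ (exists G, gam G /\ expl T G v).

Definition hybr {N} (T : tree N) (gam : tree N -> Prop) : tree N :=
  Tree (fun v => supp T gam v \/ exists G, gam G /\ impl G v)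
       (fun x y =>
          (supp T gam x /\ supp T gam y /\ lt T x y) \/
          (exists G, gam G /\ impl G x /\ impl G y /\ lt G x y) \/
          (supp T gam x /\ exists G, gam G /\ impl G y /\
                      exists r, is_least G r /\ le T x r) \/
          (exists G, gam G /\ impl G x /\ supp T gam y /\
                      exists m, is_max G m /\ le T m y /\ lt G x m) \/
          (exists D E, gam D /\ gam E /\ D <> E /\ impl D x /\ impl E y /\
                      exists rE m, is_least E rE /\ is_max D m /\ le T m rE /\ lt D x m)).

Definition is_topology {X} (op : (X -> Prop) -> Prop) : Prop :=
  (forall U V, (forall z, U z <-> V z) -> op U -> op V) /\
  op (fun _ => True) /\ op (fun _ => False) /\
  (forall U V, op U -> op V -> op (fun z => U z /\ V z)) /\
  (forall Fam : (X -> Prop) -> Prop, (forall U, Fam U -> op U) ->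
     op (fun z => exists U, Fam U /\ U z)).
Definition open_in {X} (op : (X -> Prop) -> Prop) (Y A : X -> Prop) : Prop :=
  exists U, op U /\ forall z, A z <-> U z /\ Y z.

Record ftree (N X : Type) := FTree { skel : tree N; leaf : N -> X -> Prop }.

Definition nonincreasing {N X} (F : ftree N X) : Prop :=
  forall x y, nodes (skel F) x -> nodes (skel F) y -> le (skel F) x y ->
    forall z, leaf F y z -> leaf F x z.
Definition locally_strict {N X} (F : ftree N X) : Prop :=
  forall x, nodes (skel F) x -> ~ is_max (skel F) x ->
    (forall z, leaf F x z <-> exists s, sons (skel F) x s /\ leaf F s z) /\
    (forall s s', sons (skel F) x s -> sons (skel F) x s' -> s <> s' ->
       forall z, leaf F s z -> ~ leaf F s' z).
Definition fruit {N X} (F : ftree N X) (A : N -> Prop) (z : X) : Prop :=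
  forall x, A x -> leaf F x z.
Definition strict_branches {N X} (F : ftree N X) : Prop :=
  (exists x, nodes (skel F) x) /\
  forall B, branch (skel F) B -> exists p, forall z, fruit F B z <-> z = p.
Definition ftree_open_in {N X} (op : (X -> Prop) -> Prop) (Y : X -> Prop)
  (F : ftree N X) : Prop :=
  forall x, nodes (skel F) x -> open_in op Y (leaf F x).

Definition baire_ftree {N X} (op : (X -> Prop) -> Prop) (Y : X -> Prop)
  (F : ftree N X) : Prop :=
  is_tree (skel F) /\ iso_baire_tree (skel F) /\ ftree_open_in op Y F /\
  locally_strict F /\ strict_branches F /\
  exists r, is_least (skel F) r /\ forall z, leaf F r z <-> Y z.

Definition foliage_graft {N X} (F G : ftree N X) : Prop :=
  nonincreasing G /\ graft (skel F) (skel G) /\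
  (forall r, is_least (skel G) r -> forall z, leaf G r z -> leaf F r z) /\
  (forall m, is_max (skel G) m -> forall z, leaf G m z <-> leaf F m z).

Definition cut {N X} (F G : ftree N X) (z : X) : Prop :=
  exists r, is_least (skel G) r /\ leaf F r z /\ ~ leaf G r z.

Definition skels {N X} (phi : ftree N X -> Prop) : tree N -> Prop :=
  fun T => exists G, phi G /\ skel G = T.

Definition consistent_fgrafts {N X} (F : ftree N X) (phi : ftree N X -> Prop) : Prop :=
  (forall G, phi G -> foliage_graft F G) /\
  (forall G G', phi G -> phi G' -> G <> G' -> skel G <> skel G') /\
  consistent_grafts (skel F) (skels phi).

Definition loss {N X} (F : ftree N X) (phi : ftree N X -> Prop) (z : X) : Prop :=
  exists G, phi G /\ cut F G z.

Definition fhybr {N X} (F : ftree N X) (phi : ftree N X -> Prop) : ftree N X :=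
  FTree (hybr (skel F) (skels phi))
        (fun x z =>
           ((exists G, phi G /\ impl (skel G) x /\ leaf G x z) \/
            (supp (skel F) (skels phi) x /\ leaf F x z)) /\ ~ loss F phi z).

(* Main.v *)
Require Import Defs.
From Stdlib Require Import List Arith Lia Classical ClassicalEpsilon.
Import ListNotations.
Set Implicit Arguments.
Unset Strict Implicit.



Section GenTree.
Variable N : Type.
Variable T : tree N.
Hypothesis HT : is_tree T.

Lemma t_nodes x y : lt T x y -> nodes T x /\ nodes T y.
Proof. apply (proj1 HT). Qed.
Lemma t_irr x : lt T x x -> False.
Proof. apply (proj1 (proj2 HT)). Qed.
Lemma t_trans x y z : lt T x y -> lt T y z -> lt T x z.
Proof. apply (proj1 (proj2 (proj2 HT))). Qed.
Lemma t_asym x y : lt T x y -> lt T y x -> False.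
Proof. intros a b. exact (t_irr (t_trans a b)). Qed.
Lemma t_le_lt x y z : le T x y -> lt T y z -> lt T x z.
Proof. intros [<-|a] b; auto. eapply t_trans; eauto. Qed.
Lemma t_lt_le x y z : lt T x y -> le T y z -> lt T x z.
Proof. intros a [<-|b]; auto. eapply t_trans; eauto. Qed.
Lemma t_le_le x y z : le T x y -> le T y z -> le T x z.
Proof. intros [<-|a] b; auto. right. eapply t_lt_le; eauto. Qed.
Lemma t_lt_comp a b x : lt T a x -> lt T b x -> comparable T a b.
Proof.
  intros ha hb. destruct (proj2 (proj2 (proj2 HT)) x (proj2 (t_nodes ha))) as [[_ C] _].
  apply C; auto.
Qed.
Lemma t_le_comp a b x : le T a x -> le T b x -> comparable T a b.
Proof.
  intros [<-|ha] [<-|hb].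
  - left; left; auto.
  - right; right; auto.
  - left; right; auto.
  - eapply t_lt_comp; eauto.
Qed.
Lemma t_wf_min x (S : N -> Prop) : (forall y, S y -> lt T y x) -> (exists y, S y) ->
  exists m, S m /\ forall y, S y -> le T m y.
Proof.
  intros. destruct (proj2 (proj2 (proj2 HT)) x) as [_ W].
  - destruct H0 as [y Hy]. exact (proj2 (t_nodes (H y Hy))).
  - apply W; auto.
Qed.
Lemma t_acc x : nodes T x -> Acc (lt T) x.
Proof.
  intros nx. apply NNPP; intro nA.
  assert (ex : exists y, lt T y x /\ ~ Acc (lt T) y).
  { apply NNPP; intro nE. apply nA. constructor. intros y hy.
    apply NNPP; intro ny. apply nE; eauto. }
  destruct (@t_wf_min x (fun y => lt T y x /\ ~ Acc (lt T) y)) as [m [[hm nm] mm]].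
  - intros y [h _]; auto.
  - auto.
  - apply nm. constructor. intros z hz. apply NNPP; intro nz.
    assert (lt T z x) by (eapply t_trans; eauto).
    destruct (mm z (conj H nz)) as [<-|h].
    + exact (t_irr hz).
    + exact (t_asym h hz).
Qed.
Lemma t_son_below x y : lt T x y -> exists c, sons T x c /\ le T c y.
Proof.
  intros hxy.
  destruct (classic (exists z, lt T x z /\ lt T z y)) as [ex|nex].
  - destruct (@t_wf_min y (fun z => lt T x z /\ lt T z y)) as [m [[h1 h2] mm]].
    + intros z [_ h]; auto.
    + auto.
    + exists m. split; [|right; auto]. split; [exact (proj2 (t_nodes h1))|split; auto].
      intros [z [a b]]. destruct (mm z (conj a (t_trans b h2))) as [<-|c].
      * exact (t_irr b).
      * exact (t_asym b c).
  - exists y. split; [|left; auto]. split; [exact (proj2 (t_nodes hxy))|split; auto].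
Qed.
Lemma t_son_lt x s : sons T x s -> lt T x s.
Proof. intros [_ [h _]]; auto. Qed.
Lemma t_branch_down B a b : branch T B -> B b -> lt T a b -> B a.
Proof.
  intros [[Bn Bc] Bm] hb hab.
  apply (Bm (fun z => B z \/ z = a)); auto.
  split.
  - intros z [h| ->]; auto. exact (proj1 (t_nodes hab)).
  - intros u v [hu| ->] [hv| ->].
    + auto.
    + destruct (Bc u b hu hb) as [h|h].
      * eapply t_le_comp; [exact h|right; exact hab].
      * right; right; eapply t_lt_le; eauto.
    + destruct (Bc v b hv hb) as [h|h].
      * eapply t_le_comp; [right; exact hab|exact h].
      * left; right; eapply t_lt_le; eauto.
    + left; left; auto.
Qed.
Lemma t_branch_root B r : branch T B -> is_least T r -> B r.
Proof.
  intros [[Bn Bc] Bm] [nr hr].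
  apply (Bm (fun z => B z \/ z = r)); auto.
  split.
  - intros z [h| ->]; auto.
  - intros u v [hu| ->] [hv| ->]; auto.
    + right; apply hr; auto.
    + left; apply hr; auto.
    + left; left; auto.
Qed.
End GenTree.



Lemma list_tri (l1 l2 : list nat) :
  l1 = l2 \/ strict_prefix l1 l2 \/ strict_prefix l2 l1 \/
  exists c i j a b, i <> j /\ l1 = c ++ i :: a /\ l2 = c ++ j :: b.
Proof.
  revert l2; induction l1 as [|x l1 IH]; intros [|y l2].
  - auto.
  - right; left. exists (y :: l2); split; [discriminate|reflexivity].
  - right; right; left. exists (x :: l1); split; [discriminate|reflexivity].
  - destruct (Nat.eq_dec x y) as [<-|nxy].
    + destruct (IH l2) as [<-|[[l [nl e]]|[[l [nl e]]|[c [i [j [a [b [nij [e1 e2]]]]]]]]]].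
      * auto.
      * right; left. exists l; split; auto. simpl; congruence.
      * right; right; left. exists l; split; auto. simpl; congruence.
      * right; right; right. exists (x :: c), i, j, a, b. simpl; split; auto; split; congruence.
    + right; right; right. exists [], x, y, l1, l2. auto.
Qed.

Section Iso.
Variable N : Type.
Variable T : tree N.
Hypothesis HT : is_tree T.
Variable r : N.
Hypothesis Hr : is_least T r.
Variable E : N -> nat -> N.
Hypothesis HE : forall x, nodes T x -> (forall i j, E x i = E x j -> i = j) /\
                                 (forall s, sons T x s <-> exists i, E x i = s).
Hypothesis Hpar : forall y, nodes T y -> y <> r -> exists p, sons T p y.

Definition gI (l : list nat) : N := fold_left (fun x i => E x i) l r.
Lemma gI_app l i : gI (l ++ [i]) = E (gI l) i.
Proof. unfold gI. rewrite fold_left_app. reflexivity. Qed.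
Lemma gI_node l : nodes T (gI l).
Proof.
  induction l as [|x l IH] using rev_ind.
  - exact (proj1 Hr).
  - rewrite gI_app. assert (h : sons T (gI l) (E (gI l) x)) by (apply (proj2 (@HE _ IH)); eauto).
    exact (proj1 h).
Qed.
Lemma gI_son l i : sons T (gI l) (gI (l ++ [i])).
Proof. rewrite gI_app. apply (proj2 (@HE _ (gI_node l))). eauto. Qed.
Lemma gI_le l a : le T (gI l) (gI (l ++ a)).
Proof.
  induction a as [|i a IH] using rev_ind.
  - rewrite app_nil_r; left; auto.
  - rewrite app_assoc. right. eapply t_le_lt; eauto. apply t_son_lt. apply gI_son.
Qed.
Lemma gI_lt l a : a <> [] -> lt T (gI l) (gI (l ++ a)).
Proof.
  destruct a as [|i a _] using rev_ind; [congruence|].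
  intros _. rewrite app_assoc. eapply t_le_lt; eauto. apply gI_le. apply t_son_lt; apply gI_son.
Qed.
Lemma gI_div c i j a b : i <> j -> ~ comparable T (gI (c ++ i :: a)) (gI (c ++ j :: b)).
Proof.
  intros nij hc.
  assert (hi : le T (gI (c ++ [i])) (gI (c ++ i :: a))).
  { replace (c ++ i :: a) with ((c ++ [i]) ++ a) by (rewrite <- app_assoc; reflexivity). apply gI_le. }
  assert (hj : le T (gI (c ++ [j])) (gI (c ++ j :: b))).
  { replace (c ++ j :: b) with ((c ++ [j]) ++ b) by (rewrite <- app_assoc; reflexivity). apply gI_le. }
  assert (cij : comparable T (gI (c ++ [i])) (gI (c ++ [j]))).
  { destruct hc as [h|h].
    - apply (@t_le_comp _ _ HT _ _ (gI (c ++ j :: b))); auto. eapply t_le_le; eauto.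
    - apply (@t_le_comp _ _ HT _ _ (gI (c ++ i :: a))); auto. eapply t_le_le; eauto. }
  pose proof (gI_son c i) as si. pose proof (gI_son c j) as sj.
  rewrite !gI_app in *.
  destruct cij as [[e|l]|[e|l]].
  - apply nij. eapply (proj1 (@HE _ (gI_node c))); eauto.
  - destruct sj as [_ [_ nb]]. apply nb. exists (E (gI c) i). split; auto. apply si.
  - apply nij. eapply (proj1 (@HE _ (gI_node c))); eauto.
  - destruct si as [_ [_ nb]]. apply nb. exists (E (gI c) j). split; auto. apply sj.
Qed.
Lemma gI_inj l1 l2 : gI l1 = gI l2 -> l1 = l2.
Proof.
  intros e. destruct (list_tri l1 l2) as [h|[[a [na ->]]|[[a [na ->]]|[c [i [j [a [b [nij [-> ->]]]]]]]]]]; auto.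
  - exfalso. pose proof (gI_lt l1 na). rewrite <- e in H. exact (t_irr HT H).
  - exfalso. pose proof (gI_lt l2 na). rewrite e in H. exact (t_irr HT H).
  - exfalso. apply (@gI_div c i j a b nij). rewrite e. left; left; auto.
Qed.
Lemma gI_lt_iff l1 l2 : lt T (gI l1) (gI l2) <-> strict_prefix l1 l2.
Proof.
  split.
  - intros h. destruct (list_tri l1 l2) as [<-|[p|[[a [na ->]]|[c [i [j [a [b [nij [-> ->]]]]]]]]]]; auto.
    + exfalso; exact (t_irr HT h).
    + exfalso. exact (t_asym HT h (gI_lt l2 na)).
    + exfalso. apply (@gI_div c i j a b nij). left; right; auto.
  - intros [a [na ->]]. apply gI_lt; auto.
Qed.
Lemma gI_surj y : nodes T y -> exists l, gI l = y.
Proof.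
  intros ny. induction (t_acc HT ny) as [y _ IH].
  destruct (classic (y = r)) as [->|nr].
  - exists []; reflexivity.
  - destruct (Hpar ny nr) as [p hp].
    destruct (IH p (t_son_lt hp) (proj1 (t_nodes HT (t_son_lt hp)))) as [l <-].
    destruct (proj2 (@HE _ (gI_node l)) y) as [h _]. destruct (h hp) as [i <-].
    exists (l ++ [i]). apply gI_app.
Qed.
Lemma iso_of : iso_baire_tree T.
Proof.
  assert (ex : forall y, exists l, nodes T y -> gI l = y).
  { intros y. destruct (classic (nodes T y)) as [ny|ny].
    - destruct (gI_surj ny) as [l hl]; eauto.
    - exists []; intros h; contradiction. }
  set (f := fun y => proj1_sig (constructive_indefinite_description _ (ex y))).
  assert (hf : forall y, nodes T y -> gI (f y) = y).
  { intros y ny. unfold f. destruct (constructive_indefinite_description _ (ex y)); simpl; auto. }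
  exists f. split; [|split].
  - intros x y nx ny e. rewrite <- (hf x nx), <- (hf y ny), e; auto.
  - intros s. exists (gI s). split; [apply gI_node|]. apply gI_inj. apply hf, gI_node.
  - intros x y nx ny. rewrite <- (hf x nx) at 1. rewrite <- (hf y ny) at 1. apply gI_lt_iff.
Qed.
End Iso.



Section Height.
Variable N : Type.
Variable G : tree N.
Hypothesis HG : is_tree G.
Hypothesis Hh : height_le_omega G.

Lemma h_parent x a1 : lt G a1 x -> exists p, sons G p x.
Proof.
  intros hax. apply NNPP; intro np.
  assert (P : forall p, lt G p x -> exists q, lt G p q /\ lt G q x).
  { intros p hp. apply NNPP; intro nq. apply np. exists p. split; [exact (proj2 (t_nodes HG hp))|split; auto]. }
  assert (ex0 : exists m, lt G m x /\ forall y, lt G y x -> le G m y).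
  { destruct (@t_wf_min _ _ HG x (fun y => lt G y x)) as [m [h1 h2]]; eauto. }
  assert (exS : forall p, exists m, lt G p x -> lt G p m /\ lt G m x /\ forall y, lt G p y -> lt G y x -> le G m y).
  { intros p. destruct (classic (lt G p x)) as [hp|hp].
    - destruct (@t_wf_min _ _ HG x (fun y => lt G p y /\ lt G y x)) as [m [[h1 h2] h3]].
      + intros y [_ h]; auto.
      + auto.
      + exists m. intros _. split; auto.
    - exists p. intros h; contradiction. }
  destruct (constructive_indefinite_description _ ex0) as [a0 [a0x a0m]].
  set (nx := fun p => proj1_sig (constructive_indefinite_description _ (exS p))).
  assert (hnx : forall p, lt G p x -> lt G p (nx p) /\ lt G (nx p) x /\ forall y, lt G p y -> lt G y x -> le G (nx p) y).
  { intros p hp. unfold nx. destruct (constructive_indefinite_description _ (exS p)); simpl; auto. }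
  set (a := fix a (i : nat) : N := match i with 0 => a0 | S i => nx (a i) end).
  assert (c1 : forall i, lt G (a i) x).
  { induction i; simpl; auto. apply hnx; auto. }
  assert (c2 : forall i, lt G (a i) (a (S i))).
  { intros i. simpl. apply hnx; auto. }
  assert (c2' : forall i j, i < j -> lt G (a i) (a j)).
  { intros i j hij. induction hij.
    - apply c2.
    - eapply (t_trans HG); eauto. }
  assert (c3 : forall i y, lt G y (a i) -> exists j, j < i /\ a j = y).
  { induction i; intros y hy.
    - exfalso. assert (lt G y x) by (eapply (t_trans HG); eauto).
      destruct (a0m y H) as [e|h].
      + simpl in hy. rewrite e in hy. exact (t_irr HG hy).
      + simpl in hy. exact (t_asym HG h hy).
    - assert (hyx : lt G y x) by (eapply (t_trans HG); [exact hy|apply c1]).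
      destruct (t_lt_comp HG (c1 i) hyx) as [[e|h]|[e|h]].
      + exists i; split; auto.
      + exfalso. destruct (proj2 (proj2 (hnx (a i) (c1 i))) y h hyx) as [e|h'].
        * simpl in hy. rewrite e in hy. exact (t_irr HG hy).
        * simpl in hy. exact (t_asym HG h' hy).
      + exists i; split; auto.
      + destruct (IHi y h) as [j [hj e]]. exists j; split; auto. }
  destruct Hh as [[n hn]|hw].
  - apply hn. exists (a n). split; [exact (proj1 (t_nodes HG (c1 n)))|].
    exists a. split; [|split].
    + intros i j hij _. apply c2'; auto.
    + intros i hi. apply c2'; auto.
    + intros y hy. apply c3; auto.
  - apply hw.
    destruct (classic (exists y, lt G y x /\ forall i, lt G (a i) y)) as [ex|nex].
    + destruct (@t_wf_min _ _ HG x (fun y => lt G y x /\ forall i, lt G (a i) y)) as [w [[w1 w2] w3]].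
      { intros y [h _]; auto. } { auto. }
      exists w. split; [exact (proj1 (t_nodes HG w1))|].
      exists a. split; [|split]; auto.
      intros y hy. assert (hyx : lt G y x) by (eapply (t_trans HG); eauto).
      destruct (classic (forall i, lt G (a i) y)) as [al|nal].
      * exfalso. destruct (w3 y (conj hyx al)) as [e|h].
        -- rewrite e in hy; exact (t_irr HG hy).
        -- exact (t_asym HG h hy).
      * apply not_all_ex_not in nal. destruct nal as [i ni].
        destruct (t_lt_comp HG (c1 i) hyx) as [[e|h]|[e|h]]; try contradiction.
        -- exists i; auto.
        -- exists i; auto.
        -- destruct (c3 i y h) as [j [_ e']]; eauto.
    + exists x. split; [exact (proj2 (t_nodes HG hax))|].
      exists a. split; [|split]; auto.
      intros y hy.
      destruct (classic (forall i, lt G (a i) y)) as [al|nal].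
      * exfalso. apply nex; eauto.
      * apply not_all_ex_not in nal. destruct nal as [i ni].
        destruct (t_lt_comp HG (c1 i) hy) as [[e|h]|[e|h]]; try contradiction.
        -- exists i; auto.
        -- exists i; auto.
        -- destruct (c3 i y h) as [j [_ e']]; eauto.
Qed.
End Height.



Lemma sp_len a b : strict_prefix a b -> length a < length b.
Proof. intros [l [nl ->]]. rewrite length_app. destruct l; [congruence|simpl; lia]. Qed.

Section TF.
Variable N : Type.
Variable T : tree N.
Hypothesis HT : is_tree T.
Variable f : N -> list nat.
Hypothesis finj : forall x y, nodes T x -> nodes T y -> f x = f y -> x = y.
Hypothesis fsurj : forall s, exists x, nodes T x /\ f x = s.
Hypothesis flt : forall x y, nodes T x -> nodes T y -> (lt T x y <-> strict_prefix (f x) (f y)).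

Lemma flt1 x y : lt T x y -> strict_prefix (f x) (f y).
Proof. intros h. destruct (t_nodes HT h). apply (proj1 (flt H H0)); auto. Qed.
Lemma flt2 x y : nodes T x -> nodes T y -> strict_prefix (f x) (f y) -> lt T x y.
Proof. intros a b. apply (proj2 (flt a b)). Qed.
Lemma tf_len x y : lt T x y -> length (f x) < length (f y).
Proof. intros h. apply sp_len, flt1; auto. Qed.
Lemma tf_lenle x y : le T x y -> length (f x) <= length (f y).
Proof. intros [<-|h]; [lia|]. apply tf_len in h; lia. Qed.

Lemma tf_root r : is_least T r -> f r = [].
Proof.
  intros [nr hr]. destruct (fsurj []) as [x [nx ex]].
  destruct (hr x nx) as [<-|h]; auto.
  apply flt1 in h. rewrite ex in h. apply sp_len in h. simpl in h. lia.
Qed.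

Definition tnode (s : list nat) : N := proj1_sig (constructive_indefinite_description _ (fsurj s)).
Lemma tnode_spec s : nodes T (tnode s) /\ f (tnode s) = s.
Proof. unfold tnode. destruct (constructive_indefinite_description _ (fsurj s)); auto. Qed.
Lemma tnode_f x : nodes T x -> tnode (f x) = x.
Proof. intros nx. apply finj; auto; apply tnode_spec. Qed.

Lemma tf_sons x s : nodes T x -> (sons T x s <-> exists i, tnode (f x ++ [i]) = s).
Proof.
  intros nx. split.
  - intros [ns [hl nb]]. apply flt in hl; auto. destruct hl as [a [na ea]].
    destruct a as [|i a]; [congruence|]. exists i.
    destruct a as [|j a].
    + apply finj; auto; [apply tnode_spec|]. rewrite (proj2 (tnode_spec _)); auto.
    + exfalso. apply nb. exists (tnode (f x ++ [i])). pose proof (tnode_spec (f x ++ [i])) as [n1 e1].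
      split; apply flt; auto; rewrite e1.
      * exists [i]; split; [discriminate|auto].
      * exists (j :: a); split; [discriminate|]. rewrite ea, <- app_assoc; reflexivity.
  - intros [i <-]. pose proof (tnode_spec (f x ++ [i])) as [n1 e1].
    split; auto. split.
    + apply flt; auto. rewrite e1. exists [i]; split; [discriminate|auto].
    + intros [z [a b]]. pose proof (t_nodes HT a) as [_ nz].
      apply flt in a; auto. apply flt in b; auto. apply sp_len in a. apply sp_len in b.
      rewrite e1, length_app in b. simpl in b. lia.
Qed.
Lemma tf_sons_inj x i j : tnode (f x ++ [i]) = tnode (f x ++ [j]) -> i = j.
Proof.
  intros e. assert (f (tnode (f x ++ [i])) = f (tnode (f x ++ [j]))) by (rewrite e; auto).
  rewrite !(proj2 (tnode_spec _)) in H. apply app_inv_head in H. congruence.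
Qed.
Lemma tf_parent r y : is_least T r -> nodes T y -> y <> r -> exists p, sons T p y.
Proof.
  intros hr ny nr. destruct (f y) as [|i l] eqn:ey using rev_ind.
  - exfalso. apply nr. apply finj; auto. apply hr. rewrite (tf_root hr); auto.
  - clear IHl. exists (tnode l). pose proof (tnode_spec l) as [n1 e1].
    apply tf_sons; auto. exists i. rewrite e1. rewrite <- ey. apply tnode_f; auto.
Qed.
Lemma tf_nomax x : nodes T x -> ~ is_max T x.
Proof.
  intros nx [_ h]. apply h. exists (tnode (f x ++ [0])).
  assert (sons T x (tnode (f x ++ [0]))) by (apply tf_sons; eauto). apply H.
Qed.
Lemma tf_split u v : nodes T u -> nodes T v -> ~ comparable T u v ->
  exists w s1 s2, sons T w s1 /\ sons T w s2 /\ s1 <> s2 /\ le T s1 u /\ le T s2 v.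
Proof.
  intros nu nv nc.
  destruct (list_tri (f u) (f v)) as [e|[p|[p|[c [i [j [a [b [nij [e1 e2]]]]]]]]]].
  - exfalso; apply nc; left; left; apply finj; auto.
  - exfalso; apply nc; left; right; apply flt; auto.
  - exfalso; apply nc; right; right; apply flt; auto.
  - pose proof (tnode_spec c) as [nw ew].
    exists (tnode c), (tnode (c ++ [i])), (tnode (c ++ [j])).
    assert (hs : forall k, sons T (tnode c) (tnode (c ++ [k]))).
    { intros k. apply tf_sons; auto. rewrite ew. eauto. }
    split; [auto|split; [auto|split]].
    + intros e. apply nij. apply (@tf_sons_inj (tnode c)). rewrite ew. auto.
    + split.
      * destruct a as [|k a].
        -- left. apply finj; auto; [apply tnode_spec|]. rewrite (proj2 (tnode_spec _)); auto.
        -- right. apply flt; auto; [apply tnode_spec|]. rewrite (proj2 (tnode_spec _)), e1.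
           exists (k :: a); split; [discriminate|]. rewrite <- app_assoc; auto.
      * destruct b as [|k b].
        -- left. apply finj; auto; [apply tnode_spec|]. rewrite (proj2 (tnode_spec _)); auto.
        -- right. apply flt; auto; [apply tnode_spec|]. rewrite (proj2 (tnode_spec _)), e2.
           exists (k :: b); split; [discriminate|]. rewrite <- app_assoc; auto.
Qed.
End TF.



Section Hyb.
Variable N X : Type.
Variable F : ftree N X.
Variable phi : ftree N X -> Prop.
Let T := skel F.
Hypothesis HT : is_tree T.
Variable f : N -> list nat.
Hypothesis finj : forall x y, nodes T x -> nodes T y -> f x = f y -> x = y.
Hypothesis fsurj : forall s, exists x, nodes T x /\ f x = s.
Hypothesis flt : forall x y, nodes T x -> nodes T y -> (lt T x y <-> strict_prefix (f x) (f y)).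
Variable rT : N.
Hypothesis HrT : is_least T rT.
Let Gam := skels phi.
Hypothesis HGam : consistent_grafts T Gam.
Hypothesis Hbr : forall G, Gam G -> aleph0_branching G /\ bounded_chains G /\ height_le_omega G.

Let S := supp T Gam.
Let H := hybr T Gam.

Lemma g_graft G : Gam G -> graft T G.
Proof. apply (proj1 HGam). Qed.
Lemma g_tree G : Gam G -> is_tree G.
Proof. intros h. exact (proj1 (g_graft h)). Qed.
Lemma g_root G : Gam G -> exists r, is_least G r.
Proof. intros h. destruct (g_graft h) as [_ [_ [r [hr _]]]]; eauto. Qed.
Lemma least_uniq (G : tree N) r1 r2 : is_tree G -> is_least G r1 -> is_least G r2 -> r1 = r2.
Proof.
  intros hG [n1 h1] [n2 h2]. destruct (h1 r2 n2) as [e|a]; auto.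
  destruct (h2 r1 n1) as [e|b]; auto. exfalso; exact (t_asym hG a b).
Qed.
Lemma g_rootT G r : Gam G -> is_least G r -> nodes T r.
Proof.
  intros h hr. destruct (g_graft h) as [hG [_ [r' [hr' [n _]]]]].
  rewrite (least_uniq hG hr hr'); auto.
Qed.
Lemma g_max G r m : Gam G -> is_least G r -> is_max G m -> nodes T m /\ lt T r m.
Proof.
  intros h hr hm. destruct (g_graft h) as [hG [_ [r' [hr' [n [M _]]]]]].
  rewrite (least_uniq hG hr hr'); auto.
Qed.
Lemma g_maxT G m : Gam G -> is_max G m -> nodes T m.
Proof. intros h hm. destruct (g_root h) as [r hr]. exact (proj1 (g_max h hr hm)). Qed.
Lemma g_anti G m1 m2 : Gam G -> is_max G m1 -> is_max G m2 -> comparable T m1 m2 -> m1 = m2.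
Proof.
  intros h h1 h2 hc. destruct (g_graft h) as [_ [_ [r' [_ [_ [_ [A _]]]]]]].
  apply NNPP; intro ne. exact (A m1 m2 h1 h2 ne hc).
Qed.
Lemma g_anti_le G m1 m2 : Gam G -> is_max G m1 -> is_max G m2 -> le T m1 m2 -> m1 = m2.
Proof. intros h h1 h2 hc. apply (g_anti h h1 h2). left; auto. Qed.
Lemma g_implT G x : Gam G -> impl G x -> ~ nodes T x.
Proof. intros h hx. destruct (g_graft h) as [_ [_ [r' [_ [_ [_ [_ I]]]]]]]. auto. Qed.
Lemma g_le_root (G : tree N) r x : is_least G r -> nodes G x -> le G r x.
Proof. intros [_ h] n; auto. Qed.
Lemma g_cases (G : tree N) r x : is_tree G -> is_least G r -> nodes G x -> x = r \/ is_max G x \/ impl G x.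
Proof.
  intros hG hr nx. destruct (classic (x = r)) as [e|ne]; auto.
  destruct (classic (is_max G x)) as [m|nm]; auto.
  right; right. split; auto. split; auto. intros r' hr' e. subst r'.
  apply ne. exact (least_uniq hG hr' hr).
Qed.

Lemma impl_uniq D E x : Gam D -> Gam E -> impl D x -> impl E x -> D = E.
Proof.
  intros hD hE a b. apply NNPP; intro ne. exact (proj1 (proj2 HGam D E hD hE ne) x a b).
Qed.
Lemma cons_roots D E rD rE : Gam D -> Gam E -> D <> E -> is_least D rD -> is_least E rE ->
  parallel T rD rE \/ downT T (is_max E) rD \/ downT T (is_max D) rE.
Proof. intros hD hE ne a b. exact (proj2 (proj2 HGam D E hD hE ne) rD rE a b). Qed.

Lemma root_supp G r : Gam G -> is_least G r -> S r.
Proof.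
  intros hG hr. split; [exact (g_rootT hG hr)|].
  intros [D [hD [[rD [hrD lt1]] nd]]].
  destruct (classic (D = G)) as [->|ne].
  - rewrite (least_uniq (g_tree hG) hrD hr) in lt1. exact (t_irr HT lt1).
  - destruct (cons_roots hG hD (fun e => ne (eq_sym e)) hr hrD) as [p|[d|[m [hm le1]]]].
    + apply p. right; right; auto.
    + contradiction.
    + pose proof (proj2 (g_max hG hr hm)). 
      exact (t_irr HT (t_le_lt HT le1 (t_trans HT lt1 H0))).
Qed.
Lemma root_uniq D E r : Gam D -> Gam E -> is_least D r -> is_least E r -> D = E.
Proof.
  intros hD hE h1 h2. apply NNPP; intro ne.
  destruct (cons_roots hD hE ne h1 h2) as [p|[[m [hm l1]]|[m [hm l1]]]].
  - apply p; left; left; auto.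
  - exact (t_irr HT (t_le_lt HT l1 (proj2 (g_max hE h2 hm)))).
  - exact (t_irr HT (t_le_lt HT l1 (proj2 (g_max hD h1 hm)))).
Qed.
Lemma max_supp G m : Gam G -> is_max G m -> S m.
Proof.
  intros hG hm. destruct (g_root hG) as [r hr].
  destruct (g_max hG hr hm) as [nm lrm].
  split; auto.
  intros [D [hD [[rD [hrD lt1]] nd]]].
  destruct (classic (D = G)) as [->|ne].
  - apply nd. exists m; split; auto. left; auto.
  - destruct (cons_roots hG hD (fun e => ne (eq_sym e)) hr hrD) as [p|[[m' [hm' l1]]|[m' [hm' l1]]]].
    + apply p. apply (t_lt_comp HT lrm lt1).
    + apply nd. exists m'. split; auto. right. exact (t_le_lt HT l1 lrm).
    + assert (m' = m) by (apply (g_anti_le hG hm' hm); right; exact (t_le_lt HT l1 lt1)).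
      subst m'. exact (t_irr HT (t_le_lt HT l1 lt1)).
Qed.
Lemma supp_above G r y : Gam G -> is_least G r -> S y -> lt T r y -> exists m, is_max G m /\ le T m y.
Proof.
  intros hG hr [ny ne] l. apply NNPP; intro nx. apply ne. exists G. split; auto.
  split; eauto.
Qed.
Lemma supp_impl G y : Gam G -> S y -> impl G y -> False.
Proof. intros hG [n _] hi. exact (g_implT hG hi n). Qed.
Lemma g_root_nonmax G r : Gam G -> is_least G r -> ~ is_max G r.
Proof.
  intros hG hr hm. pose proof (proj2 (g_max hG hr hm)). exact (t_irr HT H0).
Qed.

Lemma hnodes_iff y : nodes H y <-> S y \/ exists G, Gam G /\ impl G y.
Proof. unfold H, hybr; simpl. tauto. Qed.
Lemma hlt_def x y : lt H x y <->
  (S x /\ S y /\ lt T x y) \/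
  (exists G, Gam G /\ impl G x /\ impl G y /\ lt G x y) \/
  (S x /\ exists G, Gam G /\ impl G y /\ exists r, is_least G r /\ le T x r) \/
  (exists G, Gam G /\ impl G x /\ S y /\ exists m, is_max G m /\ le T m y /\ lt G x m) \/
  (exists D E, Gam D /\ Gam E /\ D <> E /\ impl D x /\ impl E y /\
     exists rE m, is_least E rE /\ is_max D m /\ le T m rE /\ lt D x m).
Proof. unfold H, hybr; simpl. tauto. Qed.

Lemma mk_ss x y : S x -> S y -> lt T x y -> lt H x y.
Proof. intros; apply hlt_def; left; auto. Qed.
Lemma mk_si x y E r : S x -> Gam E -> impl E y -> is_least E r -> le T x r -> lt H x y.
Proof. intros; apply hlt_def; right; right; left; split; eauto 7. Qed.
Lemma mk_is x y D m : Gam D -> impl D x -> S y -> is_max D m -> le T m y -> lt D x m -> lt H x y.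
Proof. intros; apply hlt_def; right; right; right; left; eauto 8. Qed.
Lemma mk_ii_same x y G : Gam G -> impl G x -> impl G y -> lt G x y -> lt H x y.
Proof. intros; apply hlt_def; right; left; eauto. Qed.
Lemma mk_ii x y D E rE m : Gam D -> Gam E -> impl D x -> impl E y -> is_least E rE -> is_max D m ->
  le T m rE -> lt D x m -> lt H x y.
Proof.
  intros hD hE ix iy hr hm l1 l2. apply hlt_def; right; right; right; right.
  exists D, E. split; auto. split; auto. split.
  - intros ->. pose proof (proj2 (g_max hE hr hm)). exact (t_irr HT (t_le_lt HT l1 H0)).
  - split; auto. split; auto. eauto 7.
Qed.

Lemma hlt_supp_r x y : lt H x y -> S y ->
  (S x /\ lt T x y) \/ (exists D m, Gam D /\ impl D x /\ is_max D m /\ le T m y /\ lt D x m).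
Proof.
  intros h sy. apply hlt_def in h.
  destruct h as [[a [b c]]|[[G [hG [_ [iy _]]]]|[[_ [G [hG [iy _]]]]|[[G [hG [ix [_ [m [hm [l1 l2]]]]]]]|[D [E [_ [hE [_ [_ [iy _]]]]]]]]]]].
  - auto.
  - exfalso; exact (supp_impl hG sy iy).
  - exfalso; exact (supp_impl hG sy iy).
  - right; eauto 8.
  - exfalso; exact (supp_impl hE sy iy).
Qed.
Lemma hlt_impl_r x y E r : lt H x y -> Gam E -> impl E y -> is_least E r ->
  (S x /\ le T x r) \/ (impl E x /\ lt E x y) \/
  (exists D m, Gam D /\ impl D x /\ is_max D m /\ le T m r /\ lt D x m).
Proof.
  intros h hE iy hr. apply hlt_def in h.
  destruct h as [[a [b c]]|[[G [hG [ix [iy' l]]]]|[[sx [G [hG [iy' [r' [hr' l]]]]]]|[[G [hG [ix [sy _]]]]|[D [E' [hD [hE' [ne [ix [iy' [rE [m [hr' [hm [l1 l2]]]]]]]]]]]]]]]].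
  - exfalso; exact (supp_impl hE b iy).
  - rewrite <- (impl_uniq hG hE iy' iy). auto.
  - left. split; auto. assert (G = E) by (apply (impl_uniq hG hE iy' iy)). subst G.
    rewrite (least_uniq (g_tree hE) hr hr'); auto.
  - exfalso; exact (supp_impl hE sy iy).
  - right; right. exists D, m.
    assert (E' = E) by (apply (impl_uniq hE' hE iy' iy)). subst E'.
    rewrite (least_uniq (g_tree hE) hr hr'). tauto.
Qed.

Lemma hnode_cases y : nodes H y -> S y \/ exists G, Gam G /\ impl G y.
Proof. apply hnodes_iff. Qed.
Lemma hnode_S y : S y -> nodes H y.
Proof. intros; apply hnodes_iff; auto. Qed.
Lemma hnode_I G y : Gam G -> impl G y -> nodes H y.
Proof. intros; apply hnodes_iff; eauto. Qed.

Lemma hlt_nodes x y : lt H x y -> nodes H x /\ nodes H y.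
Proof.
  intros h. apply hlt_def in h.
  destruct h as [[a [b c]]|[[G [hG [ix [iy _]]]]|[[sx [G [hG [iy _]]]]|[[G [hG [ix [sy _]]]]|[D [E [hD [hE [_ [ix [iy _]]]]]]]]]]].
  all: split; first [apply hnode_S; assumption | eapply hnode_I; [|eassumption]; eassumption].
Qed.

Lemma hlt_irr x : lt H x x -> False.
Proof.
  intros h. apply hlt_def in h.
  destruct h as [[a [b c]]|[[G [hG [ix [iy l]]]]|[[sx [G [hG [iy _]]]]|[[G [hG [ix [sy _]]]]|[D [E [hD [hE [ne [ix [iy _]]]]]]]]]]].
  - exact (t_irr HT c).
  - exact (t_irr (g_tree hG) l).
  - exact (supp_impl hG sx iy).
  - exact (supp_impl hG sy ix).
  - exact (ne (impl_uniq hD hE ix iy)).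
Qed.

Lemma hlt_trans x y z : lt H x y -> lt H y z -> lt H x z.
Proof.
  intros hxy hyz.
  destruct (hnode_cases (proj2 (hlt_nodes hxy))) as [sy|[E [hE iy]]].
  - destruct (hlt_supp_r hxy sy) as [[sx l1]|[D [m [hD [ix [hm [l1 l2]]]]]]];
    destruct (hnode_cases (proj2 (hlt_nodes hyz))) as [sz|[E' [hE' iz]]].
    + destruct (hlt_supp_r hyz sz) as [[_ l3]|[D' [_ [hD' [iy' _]]]]]; [|exfalso; exact (supp_impl hD' sy iy')].
      apply mk_ss; auto. eapply (t_trans HT); eauto.
    + destruct (g_root hE') as [r' hr'].
      destruct (hlt_impl_r hyz hE' iz hr') as [[_ l3]|[[iy' _]|[D' [_ [hD' [iy' _]]]]]];
        [|exfalso; exact (supp_impl hE' sy iy')|exfalso; exact (supp_impl hD' sy iy')].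
      eapply mk_si; eauto. right. eapply (t_lt_le HT); eauto.
    + destruct (hlt_supp_r hyz sz) as [[_ l3]|[D' [_ [hD' [iy' _]]]]]; [|exfalso; exact (supp_impl hD' sy iy')].
      eapply mk_is; eauto. eapply (t_le_le HT); eauto. right; auto.
    + destruct (g_root hE') as [r' hr'].
      destruct (hlt_impl_r hyz hE' iz hr') as [[_ l3]|[[iy' _]|[D' [_ [hD' [iy' _]]]]]];
        [|exfalso; exact (supp_impl hE' sy iy')|exfalso; exact (supp_impl hD' sy iy')].
      apply (mk_ii hD hE' ix iz hr' hm); auto. eapply (t_le_le HT); eauto.
  - destruct (g_root hE) as [r hr].
    destruct (hlt_impl_r hxy hE iy hr) as [[sx l1]|[[ix l1]|[D [m [hD [ix [hm [l1 l2]]]]]]]];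
    destruct (hnode_cases (proj2 (hlt_nodes hyz))) as [sz|[E2 [hE2 iz]]].
    all: try (destruct (hlt_supp_r hyz sz) as [[sy _]|[D' [m' [hD' [iy' [hm' [l3 l4]]]]]]];
      [exfalso; exact (supp_impl hE sy iy)|];
      assert (D' = E) by (apply (impl_uniq hD' hE iy' iy)); subst D';
      pose proof (proj2 (g_max hE hr hm')) as rm').
    all: try (destruct (g_root hE2) as [r2 hr2];
      destruct (hlt_impl_r hyz hE2 iz hr2) as [[sy _]|[[iy2 l3]|[D' [m' [hD' [iy' [hm' [l3 l4]]]]]]]];
      [exfalso; exact (supp_impl hE sy iy)| |];
      [assert (E2 = E) by (apply (impl_uniq hE2 hE iy2 iy)); subst E2;
       assert (r2 = r) by (apply (least_uniq (g_tree hE) hr2 hr)); subst r2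
      |assert (D' = E) by (apply (impl_uniq hD' hE iy' iy)); subst D';
       pose proof (proj2 (g_max hE hr hm')) as rm']).
    + apply mk_ss; auto. eapply (t_le_lt HT); [exact l1|]. eapply (t_lt_le HT); eauto.
    + exact (mk_si sx hE iz hr l1).
    + apply (mk_si sx hE2 iz hr2). right. eapply (t_le_lt HT); [exact l1|]. eapply (t_lt_le HT); eauto.
    + apply (mk_is hE ix sz hm' l3). eapply (t_trans (g_tree hE)); eauto.
    + apply (mk_ii_same hE ix iz). eapply (t_trans (g_tree hE)); eauto.
    + apply (mk_ii hE hE2 ix iz hr2 hm' l3). eapply (t_trans (g_tree hE)); eauto.
    + apply (mk_is hD ix sz hm); auto. right. eapply (t_le_lt HT); [exact l1|]. eapply (t_lt_le HT); eauto.
    + exact (mk_ii hD hE ix iz hr hm l1 l2).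
    + apply (mk_ii hD hE2 ix iz hr2 hm); auto. right. eapply (t_le_lt HT); [exact l1|]. eapply (t_lt_le HT); eauto.
Qed.

Definition hb (v a : N) : Prop := (S a /\ le T a v) \/
  (exists D m, Gam D /\ impl D a /\ is_max D m /\ lt D a m /\ le T m v).

Lemma comp_sym (U : tree N) a b : comparable U a b -> comparable U b a.
Proof. unfold comparable; tauto. Qed.

Lemma hb_si v a b D m : S a -> le T a v -> Gam D -> impl D b -> is_max D m -> lt D b m -> le T m v ->
  comparable H a b.
Proof.
  intros sa lav hD ib hm lbm lmv.
  destruct (g_root hD) as [rD hrD]. pose proof (proj2 (g_max hD hrD hm)) as rDm.
  destruct (t_le_comp HT lav (t_le_le HT (or_intror rDm) lmv)) as [h|[e|h]].
  - left; right. exact (mk_si sa hD ib hrD h).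
  - left; right. subst. apply (mk_si sa hD ib hrD). left; auto.
  - destruct (supp_above hD hrD sa h) as [m' [hm' lm'a]].
    assert (m' = m) by (apply (g_anti hD hm' hm); exact (t_le_comp HT (t_le_le HT lm'a lav) lmv)).
    subst m'. right; right. exact (mk_is hD ib sa hm lm'a lbm).
Qed.
Lemma hb_ii_lt v a b D E m1 m2 rD rE : Gam D -> Gam E -> impl D a -> impl E b -> is_max D m1 -> is_max E m2 ->
  lt D a m1 -> le T m1 v -> le T m2 v -> is_least D rD -> is_least E rE -> lt T rD rE -> lt H a b.
Proof.
  intros hD hE ia ib hm1 hm2 l1 l2 l3 hrD hrE lr.
  destruct (supp_above hD hrD (root_supp hE hrE) lr) as [m' [hm' lm']].
  pose proof (proj2 (g_max hE hrE hm2)) as rEm.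
  assert (m' = m1).
  { apply (g_anti hD hm' hm1). apply (t_le_comp HT (x:=v)); auto.
    eapply (t_le_le HT); [exact lm'|]. right. eapply (t_lt_le HT); eauto. }
  subst m'. exact (mk_ii hD hE ia ib hrE hm1 lm' l1).
Qed.
Lemma hb_comp v a b : hb v a -> hb v b -> comparable H a b.
Proof.
  intros [[sa la]|[D [m1 [hD [ia [hm1 [l1 l1']]]]]]] [[sb lb]|[E [m2 [hE [ib [hm2 [l2 l2']]]]]]].
  - destruct (t_le_comp HT la lb) as [[e|h]|[e|h]].
    + left; left; auto.
    + left; right; apply mk_ss; auto.
    + right; left; auto.
    + right; right; apply mk_ss; auto.
  - exact (hb_si sa la hE ib hm2 l2 l2').
  - apply comp_sym. exact (hb_si sb lb hD ia hm1 l1 l1').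
  - destruct (classic (D = E)) as [<-|ne].
    + assert (m2 = m1) by (apply (g_anti hD hm2 hm1); exact (t_le_comp HT l2' l1')). subst m2.
      destruct (t_lt_comp (g_tree hD) l1 l2) as [[e|h]|[e|h]].
      * left; left; auto.
      * left; right; exact (mk_ii_same hD ia ib h).
      * right; left; auto.
      * right; right; exact (mk_ii_same hD ib ia h).
    + destruct (g_root hD) as [rD hrD]. destruct (g_root hE) as [rE hrE].
      pose proof (proj2 (g_max hD hrD hm1)) as r1. pose proof (proj2 (g_max hE hrE hm2)) as r2.
      destruct (t_le_comp HT (t_le_le HT (or_intror r1) l1') (t_le_le HT (or_intror r2) l2')) as [[e|h]|[e|h]].
      * subst rE. exfalso. exact (ne (root_uniq hD hE hrD hrE)).
      * left; right. exact (hb_ii_lt hD hE ia ib hm1 hm2 l1 l1' l2' hrD hrE h).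
      * subst rE. exfalso. exact (ne (root_uniq hD hE hrD hrE)).
      * right; right. exact (hb_ii_lt hE hD ib ia hm2 hm1 l2 l2' l1' hrE hrD h).
Qed.

Lemma hb_of_supp a x : lt H a x -> S x -> hb x a.
Proof.
  intros h sx. destruct (hlt_supp_r h sx) as [[sa l]|[D [m [hD [ia [hm [l1 l2]]]]]]].
  - left; split; auto; right; auto.
  - right; eauto 8.
Qed.
Lemma hb_mixed r G a b x : Gam G -> is_least G r -> impl G a -> lt G a x -> hb r b -> lt H b a.
Proof.
  intros hG hr ia l [[sb lb]|[D [m [hD [ib [hm [l1 l2]]]]]]].
  - exact (mk_si sb hG ia hr lb).
  - exact (mk_ii hD hG ib ia hr hm l2 l1).
Qed.
Lemma hpred_comp a b x : lt H a x -> lt H b x -> comparable H a b.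
Proof.
  intros ha hb'. destruct (hnode_cases (proj2 (hlt_nodes ha))) as [sx|[G [hG ix]]].
  - exact (hb_comp (hb_of_supp ha sx) (hb_of_supp hb' sx)).
  - destruct (g_root hG) as [r hr].
    assert (K : forall c, lt H c x -> hb r c \/ (impl G c /\ lt G c x)).
    { intros c hc. destruct (hlt_impl_r hc hG ix hr) as [[s l]|[[i l]|[D [m [hD [i [hm [l1 l2]]]]]]]].
      - left; left; auto.
      - right; auto.
      - left; right; eauto 8. }
    destruct (K a ha) as [A|[ia la]]; destruct (K b hb') as [B|[ib lb]].
    + exact (hb_comp A B).
    + left; right. exact (hb_mixed hG hr ib lb A).
    + right; right. exact (hb_mixed hG hr ia la B).
    + destruct (t_lt_comp (g_tree hG) la lb) as [[e|h]|[e|h]].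
      * left; left; auto.
      * left; right; exact (mk_ii_same hG ia ib h).
      * right; left; auto.
      * right; right; exact (mk_ii_same hG ib ia h).
Qed.

Definition AccV (v : N) : Prop :=
  (S v -> Acc (lt H) v) /\ (forall G y, Gam G -> is_least G v -> impl G y -> Acc (lt H) y).

Lemma accA v : S v -> (forall w, nodes T w -> length (f w) < length (f v) -> AccV w) -> Acc (lt H) v.
Proof.
  intros sv IH. constructor. intros a ha.
  destruct (hlt_supp_r ha sv) as [[sa l]|[D [m [hD [ia [hm [l1 l2]]]]]]].
  - apply (IH a (proj1 (t_nodes HT l)) (tf_len HT flt l)); auto.
  - destruct (g_root hD) as [rD hrD]. pose proof (proj2 (g_max hD hrD hm)) as rm.
    assert (l3 : lt T rD v) by (eapply (t_lt_le HT); eauto).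
    exact (proj2 (IH rD (proj1 (t_nodes HT l3)) (tf_len HT flt l3)) D a hD hrD ia).
Qed.
Lemma accB G v : Gam G -> is_least G v ->
  (forall w, nodes T w -> length (f w) < length (f v) -> AccV w) -> forall y, impl G y -> Acc (lt H) y.
Proof.
  intros hG hv IH y iy.
  pose proof (accA (root_supp hG hv) IH) as Av.
  induction (t_acc (g_tree hG) (proj1 iy)) as [y _ IHy].
  constructor. intros a ha.
  destruct (hlt_impl_r ha hG iy hv) as [[sa [e|l]]|[[ia l]|[D [m [hD [ia [hm [l1 l2]]]]]]]].
  - subst; auto.
  - apply (IH a (proj1 (t_nodes HT l)) (tf_len HT flt l)); auto.
  - apply IHy; auto.
  - destruct (g_root hD) as [rD hrD]. pose proof (proj2 (g_max hD hrD hm)) as rm.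
    assert (l3 : lt T rD v) by (eapply (t_lt_le HT); eauto).
    exact (proj2 (IH rD (proj1 (t_nodes HT l3)) (tf_len HT flt l3)) D a hD hrD ia).
Qed.
Lemma accQ n : forall v, nodes T v -> length (f v) < n -> AccV v.
Proof.
  induction n; intros v nv lv; [lia|].
  assert (IH : forall w, nodes T w -> length (f w) < length (f v) -> AccV w) by (intros; apply IHn; auto; lia).
  split.
  - intros sv. exact (accA sv IH).
  - intros G y hG hv iy. exact (accB hG hv IH iy).
Qed.
Lemma hacc y : nodes H y -> Acc (lt H) y.
Proof.
  intros ny. destruct (hnode_cases ny) as [sy|[G [hG iy]]].
  - exact (proj1 (accQ (proj1 sy) (Nat.lt_succ_diag_r _)) sy).
  - destruct (g_root hG) as [r hr].
    exact (proj2 (accQ (g_rootT hG hr) (Nat.lt_succ_diag_r _)) G y hG hr iy).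
Qed.

Lemma h_tree : is_tree H.
Proof.
  split; [exact hlt_nodes|]. split; [exact hlt_irr|]. split; [exact hlt_trans|].
  intros x nx. split.
  - split.
    + intros y hy. exact (proj1 (hlt_nodes hy)).
    + intros a b ha hb'. exact (hpred_comp ha hb').
  - intros Sm hS [y0 hy0].
    assert (K : forall y, Acc (lt H) y -> Sm y -> exists m, Sm m /\ forall z, Sm z -> ~ lt H z m).
    { intros y Ay. induction Ay as [y _ IH]. intros sy.
      destruct (classic (exists z, Sm z /\ lt H z y)) as [[z [sz lz]]|nz].
      - exact (IH z lz sz).
      - exists y. split; auto. intros z sz lz. apply nz; eauto. }
    destruct (K y0 (hacc (proj1 (hlt_nodes (hS y0 hy0)))) hy0) as [m [sm mm]].
    exists m. split; auto. intros z sz.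
    destruct (hpred_comp (hS m sm) (hS z sz)) as [h|[e|h]]; auto.
    + left; auto.
    + exfalso; exact (mm z sz h).
Qed.

Lemma rT_supp : S rT.
Proof.
  split; [exact (proj1 HrT)|]. intros [D [hD [[rD [hrD l]] _]]].
  destruct (proj2 HrT rD (proj1 (t_nodes HT l))) as [e|l'].
  - subst; exact (t_irr HT l).
  - exact (t_asym HT l l').
Qed.
Lemma h_least : is_least H rT.
Proof.
  split; [apply hnode_S, rT_supp|]. intros x nx.
  destruct (hnode_cases nx) as [sx|[G [hG ix]]].
  - destruct (proj2 HrT x (proj1 sx)) as [e|l]; [left; auto|right; apply mk_ss; auto; apply rT_supp].
  - destruct (g_root hG) as [r hr]. right.
    exact (mk_si rT_supp hG ix hr (proj2 HrT r (g_rootT hG hr))).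
Qed.

Lemma gnode_H G y : Gam G -> nodes G y -> nodes H y.
Proof.
  intros hG ny. destruct (g_root hG) as [r hr].
  destruct (g_cases (g_tree hG) hr ny) as [->|[m|i]].
  - apply hnode_S; exact (root_supp hG hr).
  - apply hnode_S; exact (max_supp hG m).
  - exact (hnode_I hG i).
Qed.

Lemma L1 G a b : Gam G -> nodes G a -> nodes G b -> (lt H a b <-> lt G a b).
Proof.
  intros hG na nb. destruct (g_root hG) as [r hr]. pose proof (g_tree hG) as tG.
  pose proof (root_supp hG hr) as sr.
  destruct (g_cases tG hr na) as [->|[ma|ia]]; destruct (g_cases tG hr nb) as [->|[mb|ib]].
  - split; intros h; exfalso; [exact (hlt_irr h)|exact (t_irr tG h)].
  - pose proof (max_supp hG mb) as sb. split; intros h.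
    + destruct (proj2 hr b nb) as [e|l]; auto. subst; exfalso; exact (hlt_irr h).
    + apply mk_ss; auto. exact (proj2 (g_max hG hr mb)).
  - split; intros h.
    + destruct (proj2 hr b nb) as [e|l]; auto. subst; exfalso; exact (hlt_irr h).
    + exact (mk_si sr hG ib hr (or_introl eq_refl)).
  - pose proof (max_supp hG ma) as sa. split; intros h; exfalso.
    + destruct (hlt_supp_r h sr) as [[_ l]|[D [_ [hD [ia _]]]]].
      * exact (t_asym HT l (proj2 (g_max hG hr ma))).
      * exact (supp_impl hD sa ia).
    + apply (proj2 ma). eauto.
  - pose proof (max_supp hG ma) as sa. pose proof (max_supp hG mb) as sb. split; intros h; exfalso.
    + destruct (hlt_supp_r h sb) as [[_ l]|[D [_ [hD [ia _]]]]].
      * assert (a = b) by (apply (g_anti_le hG ma mb); right; auto). subst; exact (t_irr HT l).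
      * exact (supp_impl hD sa ia).
    + apply (proj2 ma). eauto.
  - pose proof (max_supp hG ma) as sa. split; intros h; exfalso.
    + destruct (hlt_impl_r h hG ib hr) as [[_ l]|[[ia _]|[D [_ [hD [ia _]]]]]].
      * exact (t_irr HT (t_lt_le HT (proj2 (g_max hG hr ma)) l)).
      * exact (supp_impl hG sa ia).
      * exact (supp_impl hD sa ia).
    + apply (proj2 ma). eauto.
  - split; intros h; exfalso.
    + destruct (hlt_supp_r h sr) as [[sa _]|[D [m [hD [ia' [hm [l1 _]]]]]]].
      * exact (supp_impl hG sa ia).
      * assert (D = G) by (apply (impl_uniq hD hG ia' ia)). subst D.
        exact (t_irr HT (t_lt_le HT (proj2 (g_max hG hr hm)) l1)).
    + destruct (proj2 hr a na) as [e|l].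
      * subst; exact (t_irr tG h).
      * exact (t_asym tG h l).
  - pose proof (max_supp hG mb) as sb. split; intros h.
    + destruct (hlt_supp_r h sb) as [[sa _]|[D [m [hD [ia' [hm [l1 l2]]]]]]].
      * exfalso; exact (supp_impl hG sa ia).
      * assert (D = G) by (apply (impl_uniq hD hG ia' ia)). subst D.
        assert (m = b) by (apply (g_anti_le hG hm mb l1)). subst; auto.
    + exact (mk_is hG ia sb mb (or_introl eq_refl) h).
  - split; intros h.
    + destruct (hlt_impl_r h hG ib hr) as [[sa _]|[[_ l]|[D [m [hD [ia' [hm [l1 _]]]]]]]].
      * exfalso; exact (supp_impl hG sa ia).
      * auto.
      * exfalso. assert (D = G) by (apply (impl_uniq hD hG ia' ia)). subst D.
        exact (t_irr HT (t_lt_le HT (proj2 (g_max hG hr hm)) l1)).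
    + exact (mk_ii_same hG ia ib h).
Qed.

Lemma L3 G r x s : Gam G -> is_least G r -> (x = r \/ impl G x) -> lt H x s ->
  exists c, nodes G c /\ lt H x c /\ le H c s.
Proof.
  intros hG hr hx l. pose proof (root_supp hG hr) as sr.
  destruct (hnode_cases (proj2 (hlt_nodes l))) as [ss|[E [hE is]]].
  - destruct (hlt_supp_r l ss) as [[sx l1]|[D [m [hD [ix [hm [l1 l2]]]]]]].
    + destruct hx as [->|ix]; [|exfalso; exact (supp_impl hG sx ix)].
      destruct (supp_above hG hr ss l1) as [m [hm lm]].
      exists m. split; [exact (proj1 hm)|]. split.
      * apply mk_ss; auto; [exact (max_supp hG hm)|exact (proj2 (g_max hG hr hm))].
      * destruct lm as [e|lm]; [left; auto|right; apply mk_ss; auto; exact (max_supp hG hm)].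
    + destruct hx as [->|ix']; [exfalso; exact (supp_impl hD sr ix)|].
      assert (D = G) by (apply (impl_uniq hD hG ix ix')). subst D.
      exists m. split; [exact (proj1 hm)|]. split.
      * exact (mk_is hG ix (max_supp hG hm) hm (or_introl eq_refl) l2).
      * destruct l1 as [e|lm]; [left; auto|right; apply mk_ss; auto; exact (max_supp hG hm)].
  - destruct (g_root hE) as [rE hrE].
    destruct (hlt_impl_r l hE is hrE) as [[sx l1]|[[ix l1]|[D [m [hD [ix [hm [l1 l2]]]]]]]].
    + destruct hx as [->|ix]; [|exfalso; exact (supp_impl hG sx ix)].
      destruct (classic (E = G)) as [->|ne].
      * exists s. split; [exact (proj1 is)|]. split; auto. left; auto.
      * destruct l1 as [e|l1].
        -- subst rE. exfalso; apply ne. exact (root_uniq hE hG hrE hr).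
        -- destruct (supp_above hG hr (root_supp hE hrE) l1) as [m [hm lm]].
           exists m. split; [exact (proj1 hm)|]. split.
           ++ apply mk_ss; auto; [exact (max_supp hG hm)|exact (proj2 (g_max hG hr hm))].
           ++ right. exact (mk_si (max_supp hG hm) hE is hrE lm).
    + destruct hx as [->|ix']; [exfalso; exact (supp_impl hE sr ix)|].
      assert (E = G) by (apply (impl_uniq hE hG ix ix')). subst E.
      exists s. split; [exact (proj1 is)|]. split; auto. left; auto.
    + destruct hx as [->|ix']; [exfalso; exact (supp_impl hD sr ix)|].
      assert (D = G) by (apply (impl_uniq hD hG ix ix')). subst D.
      exists m. split; [exact (proj1 hm)|]. split.
      * exact (mk_is hG ix (max_supp hG hm) hm (or_introl eq_refl) l2).
      * right. exact (mk_si (max_supp hG hm) hE is hrE l1).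
Qed.

Lemma xnodeG G r x : Gam G -> is_least G r -> (x = r \/ impl G x) -> nodes G x.
Proof. intros hG hr [->|i]; [exact (proj1 hr)|exact (proj1 i)]. Qed.

Lemma SG G r x s : Gam G -> is_least G r -> (x = r \/ impl G x) -> (sons H x s <-> sons G x s).
Proof.
  intros hG hr hx. pose proof (xnodeG hG hr hx) as nx. split.
  - intros [ns [l nb]].
    destruct (L3 hG hr hx l) as [c [nc [l1 [e|l2]]]].
    + subst c. split; auto. split; [apply (L1 hG nx nc); auto|].
      intros [z [a b]]. apply nb. exists z.
      pose proof (proj2 (t_nodes (g_tree hG) a)) as nz.
      split; [apply (L1 hG nx nz)|apply (L1 hG nz nc)]; auto.
    + exfalso. apply nb. eauto.
  - intros [ns [l nb]]. split; [exact (gnode_H hG ns)|]. split; [apply (L1 hG nx ns); auto|].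
    intros [z [a b]]. destruct (L3 hG hr hx a) as [c [nc [l1 l2]]].
    assert (l3 : lt H c s) by (destruct l2 as [<-|l2]; auto; exact (hlt_trans l2 b)).
    apply nb. exists c. split; [apply (L1 hG nx nc)|apply (L1 hG nc ns)]; auto.
Qed.

Definition noroot (x : N) : Prop := forall G, Gam G -> ~ is_least G x.

Lemma TS x s : S x -> noroot x -> sons T x s -> S s.
Proof.
  intros sx nr [ns [l nb]]. split; auto.
  intros [D [hD [[rD [hrD l1]] nd]]].
  destruct (t_lt_comp HT l1 l) as [[e|h]|[e|h]].
  - subst; exact (nr D hD hrD).
  - destruct (supp_above hD hrD sx h) as [m [hm lm]]. apply nd. exists m. split; auto.
    right. exact (t_le_lt HT lm l).
  - subst; exact (nr D hD hrD).
  - apply nb. eauto.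
Qed.

Lemma ST x s : S x -> noroot x -> (sons H x s <-> sons T x s).
Proof.
  intros sx nr. split.
  - intros [ns [l nb]].
    destruct (hnode_cases ns) as [ss|[E [hE is]]].
    + destruct (hlt_supp_r l ss) as [[_ l1]|[D [_ [hD [ix _]]]]]; [|exfalso; exact (supp_impl hD sx ix)].
      split; [exact (proj1 ss)|]. split; auto.
      intros [z [a b]]. destruct (t_son_below HT a) as [c [hc lc]].
      pose proof (TS sx nr hc) as sc. apply nb. exists c. split.
      * apply mk_ss; auto. exact (t_son_lt hc).
      * apply mk_ss; auto. exact (t_le_lt HT lc b).
    + exfalso. destruct (g_root hE) as [rE hrE].
      destruct (hlt_impl_r l hE is hrE) as [[_ [e|l1]]|[[ix _]|[D [_ [hD [ix _]]]]]].
      * subst; exact (nr E hE hrE).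
      * apply nb. exists rE. split.
        -- apply mk_ss; auto. exact (root_supp hE hrE).
        -- exact (mk_si (root_supp hE hrE) hE is hrE (or_introl eq_refl)).
      * exact (supp_impl hE sx ix).
      * exact (supp_impl hD sx ix).
  - intros hs. pose proof (TS sx nr hs) as ss. destruct hs as [ns [l nb]].
    split; [apply hnode_S; auto|]. split; [apply mk_ss; auto|].
    intros [z [a b]]. destruct (hnode_cases (proj2 (hlt_nodes a))) as [sz|[G [hG iz]]].
    + destruct (hlt_supp_r a sz) as [[_ l1]|[D [_ [hD [ix _]]]]]; [|exact (supp_impl hD sx ix)].
      destruct (hlt_supp_r b ss) as [[_ l2]|[D [_ [hD [iz _]]]]]; [|exact (supp_impl hD sz iz)].
      apply nb; eauto.
    + destruct (g_root hG) as [r hr].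
      destruct (hlt_impl_r a hG iz hr) as [[_ l1]|[[ix _]|[D [_ [hD [ix _]]]]]];
        [|exact (supp_impl hG sx ix)|exact (supp_impl hD sx ix)].
      destruct (hlt_supp_r b ss) as [[sz _]|[D [m [hD [iz' [hm [l2 _]]]]]]]; [exact (supp_impl hG sz iz)|].
      assert (D = G) by (apply (impl_uniq hD hG iz' iz)). subst D.
      assert (rs : lt T r s) by (exact (t_lt_le HT (proj2 (g_max hG hr hm)) l2)).
      destruct l1 as [e|l1].
      * subst; exact (nr G hG hr).
      * apply nb; eauto.
Qed.

Lemma hclass x : nodes H x ->
  (S x /\ noroot x) \/ (exists G, Gam G /\ is_least G x) \/ (exists G, Gam G /\ impl G x).
Proof.
  intros nx. destruct (hnode_cases nx) as [sx|i]; auto.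
  destruct (classic (noroot x)) as [nr|nr]; auto.
  right; left. apply NNPP; intro ne. apply nr. intros G hG hl. apply ne; eauto.
Qed.

Lemma h_enum x : nodes H x -> exists e : nat -> N, (forall i j, e i = e j -> i = j) /\
  (forall s, sons H x s <-> exists i, e i = s).
Proof.
  intros nx. destruct (hclass nx) as [[sx nr]|[[G [hG hr]]|[G [hG ix]]]].
  - exists (fun i => tnode fsurj (f x ++ [i])). split.
    + intros i j e. exact (tf_sons_inj e).
    + intros s. rewrite (ST s sx nr). exact (tf_sons HT finj fsurj flt s (proj1 sx)).
  - destruct (proj1 (Hbr hG) x (proj1 hr) (g_root_nonmax hG hr)) as [e [ei es]].
    exists e. split; auto. intros s. rewrite (SG s hG hr (or_introl eq_refl)). auto.
  - destruct (g_root hG) as [r hr].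
    destruct (proj1 (Hbr hG) x (proj1 ix) (proj2 (proj2 ix))) as [e [ei es]].
    exists e. split; auto. intros s. rewrite (SG s hG hr (or_intror ix)). auto.
Qed.

Lemma par_G G y : Gam G -> nodes G y -> (forall r, is_least G r -> y <> r) -> exists p, sons H p y.
Proof.
  intros hG ny nr. destruct (g_root hG) as [r hr].
  assert (l : lt G r y).
  { destruct (proj2 hr y ny) as [e|l]; auto. exfalso; exact (nr r hr (eq_sym e)). }
  destruct (h_parent (g_tree hG) (proj2 (proj2 (Hbr hG))) l) as [p hp].
  exists p. apply (SG y hG hr (x:=p)).
  - destruct (g_cases (g_tree hG) hr (proj1 (t_nodes (g_tree hG) (t_son_lt hp)))) as [e|[m|i]]; auto.
    exfalso. apply (proj2 m). exists y. exact (t_son_lt hp).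
  - auto.
Qed.

Lemma h_par y : nodes H y -> y <> rT -> exists p, sons H p y.
Proof.
  intros ny nr. destruct (hnode_cases ny) as [sy|[G [hG iy]]].
  - destruct (tf_parent HT finj fsurj flt HrT (proj1 sy) nr) as [p hp].
    pose proof hp as [_ [lpy nb]].
    assert (K : forall D m, Gam D -> is_max D m -> lt T p m -> le T m y -> exists p, sons H p y).
    { intros D m hD hm l1 l2. destruct l2 as [e|l2].
      - subst m. apply (par_G hD (proj1 hm)). intros r hr e; subst. exact (g_root_nonmax hD hr hm).
      - exfalso; apply nb; eauto. }
    destruct (classic (S p)) as [sp|nsp].
    + destruct (classic (noroot p)) as [npr|npr].
      * exists p. apply ST; auto.
      * assert (exists G, Gam G /\ is_least G p) as [G [hG hr]].
        { apply NNPP; intro ne. apply npr. intros G hG hl. apply ne; eauto. }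
        destruct (supp_above hG hr sy lpy) as [m [hm lm]].
        exact (K G m hG hm (proj2 (g_max hG hr hm)) lm).
    + assert (np : nodes T p) by exact (proj1 (t_nodes HT lpy)).
      assert (exists D, Gam D /\ expl T D p) as [D [hD [[rD [hrD l1]] nd]]].
      { apply NNPP; intro ne. apply nsp. split; auto. }
      destruct (supp_above hD hrD sy (t_trans HT l1 lpy)) as [m [hm lm]].
      destruct (t_le_comp HT lm (or_intror lpy)) as [h|[e|h]].
      * exfalso; apply nd; exists m; auto.
      * subst; exfalso; apply nd; exists m; split; auto; left; auto.
      * exact (K D m hD hm h lm).
  - apply (par_G hG (proj1 iy)). exact (proj1 (proj2 iy)).
Qed.

Lemma h_iso : iso_baire_tree H.
Proof.
  assert (ex : forall x, exists e : nat -> N, nodes H x -> (forall i j, e i = e j -> i = j) /\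
    (forall s, sons H x s <-> exists i, e i = s)).
  { intros x. destruct (classic (nodes H x)) as [nx|nx].
    - destruct (h_enum nx) as [e he]; eauto.
    - exists (fun _ => x). intros; contradiction. }
  set (E := fun x => proj1_sig (constructive_indefinite_description _ (ex x))).
  apply (iso_of h_tree h_least (E := E)).
  - intros x nx. unfold E. destruct (constructive_indefinite_description _ (ex x)); simpl; auto.
  - exact h_par.
Qed.

Lemma hlt_ss a b : S a -> S b -> lt H a b -> lt T a b.
Proof.
  intros sa sb l. destruct (hlt_supp_r l sb) as [[_ l1]|[D [_ [hD [ia _]]]]]; auto.
  exfalso; exact (supp_impl hD sa ia).
Qed.
Lemma hcomp_ss a b : S a -> S b -> comparable H a b -> comparable T a b.
Proof.
  intros sa sb [[e|l]|[e|l]].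
  - left; left; auto.
  - left; right; exact (hlt_ss sa sb l).
  - right; left; auto.
  - right; right; exact (hlt_ss sb sa l).
Qed.

Lemma br_add B u : branch H B -> nodes H u -> (forall b, B b -> comparable H b u) -> B u.
Proof.
  intros [[Bn Bc] Bm] nu hc. apply (Bm (fun z => B z \/ z = u)); auto.
  split.
  - intros z [h| ->]; auto.
  - intros a b [ha| ->] [hb| ->]; auto.
    + apply comp_sym; auto.
    + left; left; auto.
Qed.
Lemma br_above B y : branch H B -> B y -> exists w, B w /\ lt H y w.
Proof.
  intros hB hy. pose proof (proj1 (proj1 hB) y hy) as ny.
  destruct (h_enum ny) as [e [_ es]].
  assert (hs : sons H y (e 0)) by (apply es; eauto).
  apply NNPP; intro nw.
  assert (Bs : B (e 0)).
  { apply (br_add hB (proj1 hs)). intros b hb.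
    destruct (proj2 (proj1 hB) b y hb hy) as [h|[e'|h]].
    - left; right. exact (t_le_lt h_tree h (t_son_lt hs)).
    - subst. left; right; exact (t_son_lt hs).
    - exfalso; apply nw; eauto. }
  apply nw. exists (e 0); split; auto. exact (t_son_lt hs).
Qed.
Lemma br_comp B a b : branch H B -> B a -> B b -> comparable H a b.
Proof. intros hB ha hb. exact (proj2 (proj1 hB) a b ha hb). Qed.

Lemma br_step B y : branch H B -> B y -> S y -> exists y', B y' /\ S y' /\ lt T y y'.
Proof.
  intros hB hy sy. destruct (br_above hB hy) as [w [hw lw]].
  destruct (hnode_cases (proj2 (hlt_nodes lw))) as [sw|[G [hG iw]]].
  - exists w. split; auto. split; auto. exact (hlt_ss sy sw lw).
  - destruct (g_root hG) as [r hr].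
    destruct (hlt_impl_r lw hG iw hr) as [[_ lyr]|[[iy _]|[D [_ [hD [iy _]]]]]];
      [|exfalso; exact (supp_impl hG sy iy)|exfalso; exact (supp_impl hD sy iy)].
    destruct (classic (exists b, B b /\ lt H w b /\ ~ impl G b)) as [[b [hb [lb nib]]]|nex].
    + destruct (hnode_cases (proj2 (hlt_nodes lb))) as [sb|[E [hE ib]]].
      * destruct (hlt_supp_r lb sb) as [[sw _]|[D [m [hD [iw' [hm [l1 l2]]]]]]]; [exfalso; exact (supp_impl hG sw iw)|].
        assert (D = G) by (apply (impl_uniq hD hG iw' iw)). subst D.
        exists b. split; auto. split; auto.
        exact (t_le_lt HT lyr (t_lt_le HT (proj2 (g_max hG hr hm)) l1)).
      * destruct (g_root hE) as [rE hrE].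
        destruct (hlt_impl_r lb hE ib hrE) as [[sw _]|[[iw' _]|[D [m [hD [iw' [hm [l1 l2]]]]]]]].
        -- exfalso; exact (supp_impl hG sw iw).
        -- exfalso. apply nib. rewrite <- (impl_uniq hE hG iw' iw). auto.
        -- assert (D = G) by (apply (impl_uniq hD hG iw' iw)). subst D.
           exists rE. split; [|split; [exact (root_supp hE hrE)|]].
           ++ apply (t_branch_down h_tree hB hb). exact (mk_si (root_supp hE hrE) hE ib hrE (or_introl eq_refl)).
           ++ exact (t_le_lt HT lyr (t_lt_le HT (proj2 (g_max hG hr hm)) l1)).
    + pose proof (g_tree hG) as tG.
      assert (above : forall b, B b -> lt H w b -> impl G b).
      { intros b hb lb. apply NNPP; intro ni. apply nex; eauto. }
      set (C := fun u => u = r \/ (B u /\ impl G u)).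
      assert (chC : chain G C).
      { split.
        - intros u [->|[_ i]]; [exact (proj1 hr)|exact (proj1 i)].
        - intros u v [->|[bu iu]] [->|[bv iv]].
          + left; left; auto.
          + left; apply (g_le_root hr (proj1 iv)).
          + right; apply (g_le_root hr (proj1 iu)).
          + destruct (br_comp hB bu bv) as [[e|l]|[e|l]].
            * left; left; auto.
            * left; right; apply (L1 hG (proj1 iu) (proj1 iv)); auto.
            * right; left; auto.
            * right; right; apply (L1 hG (proj1 iv) (proj1 iu)); auto. }
      destruct (proj1 (proj2 (Hbr hG)) C chC (ex_intro _ r (or_introl eq_refl))) as [u0 [nu0 bu0]].
      assert (wu : le G w u0) by (apply bu0; right; auto).
      assert (Hle : forall b, B b -> le H b w \/ (impl G b /\ le G b u0)).
      { intros b hb. destruct (br_comp hB hb hw) as [h|[e|l]]; auto.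
        - left; left; auto.
        - right. pose proof (above b hb l) as ib. split; auto. apply bu0; right; auto. }
      destruct (g_cases tG hr nu0) as [->|[m0|i0]].
      * exfalso. destruct wu as [e|l].
        -- exact (proj1 (proj2 iw) r hr e).
        -- destruct (proj2 hr w (proj1 iw)) as [e|l']; [exact (proj1 (proj2 iw) r hr (eq_sym e))|].
           exact (t_asym tG l l').
      * assert (wlt : lt H w u0).
        { apply (L1 hG (proj1 iw) nu0). destruct wu as [e|l]; auto. subst. exfalso; exact (proj2 (proj2 iw) m0). }
        assert (Bu : B u0).
        { apply (br_add hB (gnode_H hG nu0)). intros b hb. left.
          destruct (Hle b hb) as [[e|l]|[ib [e|l]]].
          - subst; right; auto.
          - right; exact (hlt_trans l wlt).
          - left; auto.
          - right; apply (L1 hG (proj1 ib) nu0); auto. }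
        exists u0. split; auto. split; [exact (max_supp hG m0)|].
        exact (t_le_lt HT lyr (proj2 (g_max hG hr m0))).
      * exfalso.
        assert (wle : le H w u0).
        { destruct wu as [e|l]; [left; auto|right; apply (L1 hG (proj1 iw) nu0); auto]. }
        assert (Bu : B u0).
        { apply (br_add hB (gnode_H hG nu0)). intros b hb. left.
          destruct (Hle b hb) as [l|[ib [e|l]]].
          - exact (t_le_le h_tree l wle).
          - left; auto.
          - right; apply (L1 hG (proj1 ib) nu0); auto. }
        destruct (br_above hB Bu) as [b [hb lb]].
        assert (lwb : lt H w b) by exact (t_le_lt h_tree wle lb).
        pose proof (above b hb lwb) as ib.
        assert (lb' : lt G u0 b) by (apply (L1 hG nu0 (proj1 ib)); auto).
        assert (bu : le G b u0) by (apply bu0; right; auto).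
        destruct bu as [e|l]; [subst; exact (t_irr tG lb')|exact (t_asym tG lb' l)].
Qed.

Lemma br_deep B k : branch H B -> exists y, B y /\ S y /\ k <= length (f y).
Proof.
  intros hB. induction k.
  - exists rT. split; [exact (t_branch_root hB h_least)|]. split; [exact rT_supp|lia].
  - destruct IHk as [y [hy [sy ly]]]. destruct (br_step hB hy sy) as [y' [h1 [h2 h3]]].
    exists y'. split; auto. split; auto. pose proof (tf_len HT flt h3). lia.
Qed.
Lemma br_supp_lt B a b : branch H B -> B a -> B b -> S a -> S b -> length (f a) < length (f b) -> lt T a b.
Proof.
  intros hB ha hb sa sb l. destruct (hcomp_ss sa sb (br_comp hB ha hb)) as [[e|h]|[e|h]]; auto.
  - subst; lia.
  - subst; lia.
  - pose proof (tf_len HT flt h); lia.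
Qed.
Lemma br_impl_above B G x : branch H B -> B x -> Gam G -> impl G x ->
  exists m y, is_max G m /\ lt G x m /\ le T m y /\ B y /\ S y.
Proof.
  intros hB hx hG ix. destruct (g_root hG) as [r hr]. pose proof (root_supp hG hr) as sr.
  assert (Br : B r) by (apply (t_branch_down h_tree hB hx); exact (mk_si sr hG ix hr (or_introl eq_refl))).
  destruct (br_deep (Nat.succ (length (f r))) hB) as [y [hy [sy ly]]].
  assert (lry : lt T r y) by (apply (br_supp_lt hB Br hy sr sy); exact ly).
  destruct (br_comp hB hx hy) as [[e|l]|[e|l]].
  - subst; exfalso; exact (supp_impl hG sy ix).
  - destruct (hlt_supp_r l sy) as [[sx _]|[D [m [hD [ix' [hm [l1 l2]]]]]]]; [exfalso; exact (supp_impl hG sx ix)|].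
    assert (D = G) by (apply (impl_uniq hD hG ix' ix)). subst D. exists m, y; tauto.
  - subst; exfalso; exact (supp_impl hG sy ix).
  - exfalso. destruct (hlt_impl_r l hG ix hr) as [[_ l1]|[[iy _]|[D [_ [hD [iy _]]]]]].
    + exact (t_irr HT (t_le_lt HT l1 lry)).
    + exact (supp_impl hG sy iy).
    + exact (supp_impl hD sy iy).
Qed.

Variable op : (X -> Prop) -> Prop.
Hypothesis Fopen : ftree_open_in op (fun _ => True) F.
Hypothesis Fls : locally_strict F.
Hypothesis Fsb : strict_branches F.
Hypothesis Froot : forall z, leaf F rT z <-> True.
Hypothesis Hfg : forall G, phi G -> foliage_graft F G.
Hypothesis Hsk : forall G G', phi G -> phi G' -> G <> G' -> skel G <> skel G'.
Hypothesis Hgl : forall G, phi G -> locally_strict G /\ ftree_open_in op (fun _ => True) G.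

Let L := loss F phi.
Let FH := fhybr F phi.

Lemma skel_inj G1 G2 : phi G1 -> phi G2 -> skel G1 = skel G2 -> G1 = G2.
Proof. intros a b e. apply NNPP; intro ne. exact (Hsk a b ne e). Qed.
Lemma gam_of G : phi G -> Gam (skel G).
Proof. intros h. exists G; auto. Qed.

Lemma leafH_supp x z : S x -> (leaf FH x z <-> leaf F x z /\ ~ L z).
Proof.
  intros sx. simpl. split.
  - intros [[[G [hG [ix _]]]|[_ h]] nl].
    + exfalso. exact (supp_impl (gam_of hG) sx ix).
    + auto.
  - intros [h nl]. split; auto.
Qed.
Lemma leafH_G G x z : phi G -> nodes (skel G) x -> (leaf FH x z <-> leaf G x z /\ ~ L z).
Proof.
  intros hG nx. pose proof (gam_of hG) as gG. destruct (g_root gG) as [r hr].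
  destruct (Hfg hG) as [ni [_ [h3 h4]]].
  destruct (g_cases (g_tree gG) hr nx) as [->|[m|i]].
  - rewrite (leafH_supp z (root_supp gG hr)). split.
    + intros [a nl]. split; auto. apply NNPP; intro nb. apply nl. exists G. split; auto. exists r; auto.
    + intros [a nl]. split; auto.
  - rewrite (leafH_supp z (max_supp gG m)). rewrite (h4 x m z). tauto.
  - simpl. split.
    + intros [[[G' [hG' [ix' a]]]|[sx _]] nl].
      * assert (G' = G) by (apply skel_inj; auto; apply (impl_uniq (gam_of hG') gG ix' i)). subst; auto.
      * exfalso; exact (supp_impl gG sx i).
    + intros [a nl]. split; auto. left. eauto.
Qed.

Lemma ls_son (F' : ftree N X) p s z : locally_strict F' -> nodes (skel F') p -> ~ is_max (skel F') p ->
  sons (skel F') p s -> leaf F' s z -> leaf F' p z.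
Proof. intros hl np nm hs h. apply (proj1 (hl p np nm) z). eauto. Qed.

Lemma F_noninc v y z : le T v y -> leaf F y z -> leaf F v z.
Proof.
  intros hv. remember (length (f y)) as n eqn:en. revert v y hv en.
  induction n as [n IH] using lt_wf_ind. intros v y hv en hy.
  destruct hv as [<-|l]; auto.
  assert (ny : nodes T y) by exact (proj2 (t_nodes HT l)).
  assert (nr : y <> rT).
  { intros ->. destruct (proj2 HrT v (proj1 (t_nodes HT l))) as [e|l'].
    - subst; exact (t_irr HT l).
    - exact (t_asym HT l l'). }
  destruct (tf_parent HT finj fsurj flt HrT ny nr) as [p hp].
  pose proof hp as [_ [lpy nb]].
  assert (np : nodes T p) by exact (proj1 (t_nodes HT lpy)).
  assert (hpz : leaf F p z) by exact (ls_son Fls np (tf_nomax HT finj fsurj flt np) hp hy).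
  assert (vp : le T v p).
  { destruct (t_lt_comp HT l lpy) as [h|[e|h]]; auto. left; auto. exfalso; apply nb; eauto. }
  apply (IH (length (f p))) with (y := p); auto. subst n. exact (tf_len HT flt lpy).
Qed.

Lemma gam_inv Gs : Gam Gs -> exists G, phi G /\ skel G = Gs.
Proof. intros h; exact h. Qed.

Lemma FH_open : ftree_open_in op (fun z => ~ L z) FH.
Proof.
  intros x nx. change (nodes H x) in nx.
  destruct (hnode_cases nx) as [sx|[Gs [hGs ix]]].
  - destruct (Fopen (proj1 sx)) as [U [oU hU]]. exists U. split; auto.
    intros z. rewrite (leafH_supp z sx), hU. tauto.
  - destruct (gam_inv hGs) as [G [hG <-]].
    destruct (proj2 (Hgl hG) x (proj1 ix)) as [U [oU hU]]. exists U. split; auto.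
    intros z. rewrite (leafH_G z hG (proj1 ix)), hU. tauto.
Qed.

Lemma FH_ls : locally_strict FH.
Proof.
  intros x nx _. change (nodes H x) in nx. simpl skel.
  destruct (hclass nx) as [[sx nr]|[[Gs [hGs hr]]|[Gs [hGs ix]]]].
  - pose proof (tf_nomax HT finj fsurj flt (proj1 sx)) as nm.
    destruct (Fls (proj1 sx) nm) as [F1 F2]. split.
    + intros z. rewrite (leafH_supp z sx), F1. split.
      * intros [[s [hs ls]] nl]. exists s. split; [apply (ST s sx nr); auto|].
        apply (leafH_supp z (TS sx nr hs)). auto.
      * intros [s [hs ls]]. apply (ST s sx nr) in hs.
        apply (leafH_supp z (TS sx nr hs)) in ls. destruct ls. split; eauto.
    + intros s s' hs hs' ne z l1 l2. apply (ST s sx nr) in hs. apply (ST s' sx nr) in hs'.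
      apply (leafH_supp z (TS sx nr hs)) in l1. apply (leafH_supp z (TS sx nr hs')) in l2.
      exact (F2 s s' hs hs' ne z (proj1 l1) (proj1 l2)).
  - destruct (gam_inv hGs) as [G [hG <-]].
    assert (K : forall s, sons H x s <-> sons (skel G) x s) by (intros s; exact (SG s hGs hr (or_introl eq_refl))).
    destruct (proj1 (Hgl hG) x (proj1 hr) (g_root_nonmax hGs hr)) as [G1 G2]. split.
    + intros z. rewrite (leafH_G z hG (proj1 hr)), G1. split.
      * intros [[s [hs ls]] nl]. exists s. split; [apply K; auto|].
        apply (leafH_G z hG (proj1 hs)). auto.
      * intros [s [hs ls]]. apply K in hs. apply (leafH_G z hG (proj1 hs)) in ls. destruct ls. split; eauto.
    + intros s s' hs hs' ne z l1 l2. apply K in hs. apply K in hs'.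
      apply (leafH_G z hG (proj1 hs)) in l1. apply (leafH_G z hG (proj1 hs')) in l2.
      exact (G2 s s' hs hs' ne z (proj1 l1) (proj1 l2)).
  - destruct (gam_inv hGs) as [G [hG <-]]. destruct (g_root hGs) as [r hr].
    assert (K : forall s, sons H x s <-> sons (skel G) x s) by (intros s; exact (SG s hGs hr (or_intror ix))).
    destruct (proj1 (Hgl hG) x (proj1 ix) (proj2 (proj2 ix))) as [G1 G2]. split.
    + intros z. rewrite (leafH_G z hG (proj1 ix)), G1. split.
      * intros [[s [hs ls]] nl]. exists s. split; [apply K; auto|].
        apply (leafH_G z hG (proj1 hs)). auto.
      * intros [s [hs ls]]. apply K in hs. apply (leafH_G z hG (proj1 hs)) in ls. destruct ls. split; eauto.
    + intros s s' hs hs' ne z l1 l2. apply K in hs. apply K in hs'.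
      apply (leafH_G z hG (proj1 hs)) in l1. apply (leafH_G z hG (proj1 hs')) in l2.
      exact (G2 s s' hs hs' ne z (proj1 l1) (proj1 l2)).
Qed.

Lemma FH_sb : strict_branches FH.
Proof.
  split; [exists rT; exact (proj1 h_least)|].
  intros B hB. change (branch H B) in hB.
  set (C := fun v => exists y, B y /\ S y /\ le T v y).
  assert (Cn : forall v, C v -> nodes T v).
  { intros v [y [_ [sy [<-|l]]]]; [exact (proj1 sy)|exact (proj1 (t_nodes HT l))]. }
  assert (hC : branch T C).
  { split; [split; auto|].
    - intros v1 v2 [y1 [b1 [s1 l1]]] [y2 [b2 [s2 l2]]].
      destruct (hcomp_ss s1 s2 (br_comp hB b1 b2)) as [h|h].
      + exact (t_le_comp HT (t_le_le HT l1 h) l2).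
      + exact (t_le_comp HT l1 (t_le_le HT l2 h)).
    - intros C' [C'n C'c] sub v hv.
      destruct (br_deep (length (f v)) hB) as [y [hy [sy ly]]].
      assert (Cy : C y) by (exists y; split; auto; split; auto; left; auto).
      destruct (C'c v y hv (sub y Cy)) as [h|[e|h]].
      + exists y; auto.
      + subst; auto.
      + pose proof (tf_len HT flt h). lia. }
  destruct (proj2 Fsb C hC) as [p0 hp0].
  assert (Fy : forall y, B y -> S y -> leaf F y p0).
  { intros y hy sy. apply (proj2 (hp0 p0) eq_refl). exists y; split; auto; split; auto; left; auto. }
  assert (comp_p0 : forall u v, nodes T u -> nodes T v -> leaf F u p0 -> leaf F v p0 -> comparable T u v).
  { intros u v nu nv lu lv. apply NNPP; intro nc.
    destruct (tf_split HT finj fsurj flt nu nv nc) as [w [s1 [s2 [h1 [h2 [ne [l1 l2]]]]]]].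
    pose proof (proj1 (t_nodes HT (t_son_lt h1))) as nw.
    exact (proj2 (Fls nw (tf_nomax HT finj fsurj flt nw)) s1 s2 h1 h2 ne p0 (F_noninc l1 lu) (F_noninc l2 lv)). }
  assert (nL : ~ L p0).
  { intros [G [hG [r [hr [lr nlr]]]]]. pose proof (gam_of hG) as gG.
    pose proof (root_supp gG hr) as sr.
    destruct (br_deep (Nat.succ (length (f r))) hB) as [y [hy [sy ly]]].
    destruct (comp_p0 r y (proj1 sr) (proj1 sy) lr (Fy y hy sy)) as [[e|l]|h].
    - subst. exact (Nat.nle_succ_diag_l _ ly).
    - destruct (supp_above gG hr sy l) as [m [hm lm]].
      pose proof (F_noninc lm (Fy y hy sy)) as Fm.
      destruct (Hfg hG) as [ni [_ [_ h4]]].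
      apply nlr. apply (ni r m (proj1 hr) (proj1 hm) (proj2 hr m (proj1 hm))). apply h4; auto.
    - pose proof (tf_lenle HT flt h). exact (Nat.nle_succ_diag_l _ (Nat.le_trans _ _ _ ly H0)). }
  exists p0. intros z. split.
  - intros fz. apply hp0. intros v [y [hy [sy l]]].
    apply (F_noninc l). apply (proj1 (leafH_supp z sy) (fz y hy)).
  - intros ->. intros x hx. pose proof (proj1 (proj1 hB) x hx) as nx.
    destruct (hnode_cases nx) as [sx|[Gs [hGs ix]]].
    + apply (leafH_supp p0 sx). split; auto.
    + destruct (gam_inv hGs) as [G [hG <-]].
      destruct (br_impl_above hB hx hGs ix) as [m [y [hm [lxm [lmy [hy sy]]]]]].
      apply (leafH_G p0 hG (proj1 ix)). split; auto.
      destruct (Hfg hG) as [ni [_ [_ h4]]].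
      apply (ni x m (proj1 ix) (proj1 hm) (or_intror lxm)). apply h4; auto.
      exact (F_noninc lmy (Fy y hy sy)).
Qed.

Lemma FH_baire : baire_ftree op (fun z => ~ L z) FH.
Proof.
  split; [exact h_tree|]. split; [exact h_iso|]. split; [exact FH_open|].
  split; [exact FH_ls|]. split; [exact FH_sb|].
  exists rT. split; [exact h_least|]. intros z. rewrite (leafH_supp z rT_supp), Froot. tauto.
Qed.

End Hyb.

Theorem mainTheorem11 (N X : Type) (op : (X -> Prop) -> Prop)
  (F : ftree N X) (phi : ftree N X -> Prop) :
  is_topology op ->
  baire_ftree op (fun _ => True) F ->
  consistent_fgrafts F phi ->
  (forall G, phi G ->
     aleph0_branching (skel G) /\ locally_strict G /\
     ftree_open_in op (fun _ => True) G /\ bounded_chains (skel G) /\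
     height_le_omega (skel G)) ->
  baire_ftree op (fun z => ~ loss F phi z) (fhybr F phi).
Proof.
  intros Htop [HT [[f [finj [fsurj flt]]] [Fopen [Fls [Fsb [rT [HrT Froot]]]]]]] [Hfg [Hsk HGam]] Hg.
  apply (FH_baire HT finj fsurj flt HrT HGam); auto.
  - intros Gs [G [hG <-]]. destruct (Hg G hG) as [a [_ [_ [b c]]]]. auto.
  - intros G hG. destruct (Hg G hG) as [_ [a [b _]]]. auto.
Qed.
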